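(* Let $A>1$ and let $F=(F_1,\dots,F_n)$ with each $F_j\in(\mathscr{A}*\mathscr{A})^{(A)}$ a non-commutative power series in the $2n$ variables $X_1,\dots,X_n,Y_1,\dots,Y_n$, such that $F(0,\dots,0,0,\dots,0)=0$. Let $Q=\mathscr{J}_2F(0,\dots,0)\in M_{n\times n}(\mathbb{C})$ and assume that $Q$ is invertible. Then there exist $a_0\in(0,A)$ and a finite constant $C$ such that for every $a\in(0,a_0)$ and every $U\in(\mathscr{A}^{(A)})^n$ with $\|U\|_A<a$, there exists a unique $V\in(\mathscr{A}^{(A)})^n$ with $\|V\|_A<Ca$ solving $F(U,V)=0$. Moreover, there exists $f\in(\mathscr{A}^{(a)})^n$ such that $V=f(U)$.
   Context: $\mathscr{A}=\mathbb{C}\langle X_1,\dots,X_n\rangle$ is the algebra of non-commutative polynomials in $n$ variables; $\mathscr{A}*\mathscr{A}=\mathbb{C}\langle X_1,\dots,X_n,Y_1,\dots,Y_n\rangle$. Every polynomial $P$ is written $P=\sum_q\lambda_q(P)q$ over monomials $q$, and for $A>1$ one sets $\|P\|_A=\sum_q|\lambda_q(P)|A^{\deg q}$; $\mathscr{A}^{(A)}$ (resp. $(\mathscr{A}*\mathscr{A})^{(A)}$) denotes the completion for this norm (a Banach algebra of absolutely convergent non-commutative power series). For tuples $G=(G_1,\dots,G_n)$ one sets $\|G\|_A=\max_j\|G_j\|_A$. If $T_1,\dots,T_m$ are elements of a Banach algebra of norm at most $A$, any element of the completion for $\|\cdot\|_A$ in $m$ variables can be evaluated at $(T_1,\dots,T_m)$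 (continuous extension of substitution); this defines $F(U,V)$ and $f(U)$. $\mathscr{J}_2F$ is the $n\times n$ matrix $(\partial_{Y_j}F_i)_{i,j}$ of free difference quotients in the variables $Y_j$ (with $X$'s held fixed), where $\partial_{Y_j}$ is the derivation into $(\mathscr{A}*\mathscr{A})\otimes(\mathscr{A}*\mathscr{A})^{op}$ with $\partial_{Y_j}Y_i=\delta_{ij}1\otimes1$, $\partial_{Y_j}X_i=0$; evaluating both tensor factors at $0$ gives a scalar matrix $Q$. *)

(* Defs.v *)
From Stdlib Require Import Reals List Arith.
Import ListNotations.
Open Scope R_scope.

Record C := mkC { re : R; im : R }.
Definition C0 : C := mkC 0 0.
Definition C1 : C := mkC 1 0.
Definition Cadd (x y : C) : C := mkC (re x + re y) (im x + im y).
Definition Cmul (x y : C) : C :=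
  mkC (re x * re y - im x * im y) (re x * im y + im x * re y).
Definition Cmod (x : C) : R := sqrt (re x * re x + im x * im x).
Definition Csum (l : list C) : C := fold_right Cadd C0 l.
Definition Rsum (l : list R) : R := fold_right Rplus 0 l.
Definition Cinfinite_sum (s : nat -> C) (l : C) : Prop :=
  infinite_sum (fun d => re (s d)) (re l) /\ infinite_sum (fun d => im (s d)) (im l).

(* A monomial in m non-commuting variables Z_0,...,Z_{m-1} is a word
   (list of letters < m); its degree is its length. *)
Fixpoint words (m d : nat) : list (list nat) :=
  match d with
  | O => [ [] ]
  | S d' => flat_map (fun w => map (fun i => i :: w) (seq 0 m)) (words m d')
  end.
Definition valid_word (m : nat) (w : list nat) : Prop := Forall (fun x => (x < m)%nat) w.

(* A (formal) non-commutative series: q |-> lambda_q(P). *)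
Definition ser := list nat -> C.
Definition supported (m : nat) (P : ser) : Prop :=
  forall w, ~ valid_word m w -> P w = C0.

(* ||P||_A = sum_q |lambda_q(P)| A^{deg q}, grouped by degree:
   has_norm m A P l  <->  this (nonnegative) series converges to l. *)
Definition has_norm (m : nat) (A : R) (P : ser) (l : R) : Prop :=
  infinite_sum (fun d => A ^ d * Rsum (map (fun w => Cmod (P w)) (words m d))) l.
(* P belongs to the completion (A-variables)^{(A)} *)
Definition in_space (m : nat) (A : R) (P : ser) : Prop :=
  supported m P /\ exists l, has_norm m A P l.
Definition norm_lt (m : nat) (A : R) (P : ser) (r : R) : Prop :=
  exists l, has_norm m A P l /\ l < r.

Definition ser_one : ser := fun w => match w with [] => C1 | _ => C0 end.
Definition ser_mul (P Q : ser) : ser := fun w =>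
  Csum (map (fun k => Cmul (P (firstn k w)) (Q (skipn k w))) (seq 0 (S (length w)))).
Definition ser_prod (l : list ser) : ser := fold_right ser_mul ser_one l.

(* Evaluation G(T_0,...,T_{m-1}) of a series G in m variables at series T_k:
   coefficientwise, the degree-grouped sum  sum_d sum_{deg q = d} lambda_q(G) q(T).
   eval_is m G T R  means  G(T) = R. *)
Definition eval_term (m : nat) (G : ser) (T : nat -> ser) (w : list nat) (d : nat) : C :=
  Csum (map (fun q => Cmul (G q) (ser_prod (map T q) w)) (words m d)).
Definition eval_is (m : nat) (G : ser) (T : nat -> ser) (R : ser) : Prop :=
  forall w, Cinfinite_sum (eval_term m G T w) (R w).

(* pairing of n-tuples (U,V) into the 2n variables X_0..X_{n-1},Y_0..Y_{n-1};
   letter i < n is X_i, letter n + j is Y_j *)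
Definition pair_tuple (n : nat) (U V : nat -> ser) : nat -> ser :=
  fun k => if Nat.ltb k n then U k else V (k - n)%nat.

(* d_{Y_j} q = sum over positions k with q_k = Y_j of (q_<k) (x) (q_>k) *)
Definition fdq (n j : nat) (q : list nat) : list (list nat * list nat) :=
  flat_map (fun k => if Nat.eqb (nth k q 0%nat) (n + j) then [(firstn k q, skipn (S k) q)] else [])
           (seq 0 (length q)).
Definition ev0 (w : list nat) : C := match w with [] => C1 | _ => C0 end.
Definition dq0 (n j : nat) (q : list nat) : C :=
  Csum (map (fun p => Cmul (ev0 (fst p)) (ev0 (snd p))) (fdq n j q)).
(* Q = J_2 F(0): Q i j = sum_q lambda_q(F_i) (d_{Y_j} q)(0 (x) 0) *)
Definition jac0_is (n : nat) (F : nat -> ser) (Q : nat -> nat -> C) : Prop :=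
  forall i j, (i < n)%nat -> (j < n)%nat ->
    Cinfinite_sum (fun d => Csum (map (fun q => Cmul (F i q) (dq0 n j q)) (words (2 * n) d)))
                  (Q i j).

Definition Cmatmul (n : nat) (P Q : nat -> nat -> C) : nat -> nat -> C :=
  fun i j => Csum (map (fun k => Cmul (P i k) (Q k j)) (seq 0 n)).
Definition Cid (i j : nat) : C := if Nat.eqb i j then C1 else C0.
Definition Cinvertible (n : nat) (Q : nat -> nat -> C) : Prop :=
  exists R, forall i j, (i < n)%nat -> (j < n)%nat ->
    Cmatmul n Q R i j = Cid i j /\ Cmatmul n R Q i j = Cid i j.

(* Main.v *)
From Pilot Require Import Defs.
From Stdlib Require Import Reals List Arith Lia Lra Psatz.
From Stdlib Require Import ClassicalEpsilon FunctionalExtensionality.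
From Coquelicot Require Complex.
Import ListNotations.
Import Pilot.Defs.
Open Scope R_scope.

Definition Copp (x : C) : C := mkC (- re x) (- im x).
Definition Csub (x y : C) : C := Cadd x (Copp y).
Definition CR (r : R) : C := mkC r 0.

Lemma C_ext : forall x y : C, re x = re y -> im x = im y -> x = y.
Proof. intros [a b] [c d]; simpl; intros; subst; reflexivity. Qed.

Ltac Cring := intros; repeat match goal with x : C |- _ => destruct x end;
  apply C_ext; simpl; ring.

Lemma Cadd_comm x y : Cadd x y = Cadd y x. Proof. Cring. Qed.
Lemma Cadd_assoc x y z : Cadd x (Cadd y z) = Cadd (Cadd x y) z. Proof. Cring. Qed.
Lemma Cadd_0_l x : Cadd C0 x = x. Proof. Cring. Qed.
Lemma Cadd_0_r x : Cadd x C0 = x. Proof. Cring. Qed.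
Lemma Cmul_comm x y : Cmul x y = Cmul y x. Proof. Cring. Qed.
Lemma Cmul_assoc x y z : Cmul x (Cmul y z) = Cmul (Cmul x y) z. Proof. Cring. Qed.
Lemma Cmul_1_l x : Cmul C1 x = x. Proof. Cring. Qed.
Lemma Cmul_1_r x : Cmul x C1 = x. Proof. Cring. Qed.
Lemma Cmul_0_l x : Cmul C0 x = C0. Proof. Cring. Qed.
Lemma Cmul_0_r x : Cmul x C0 = C0. Proof. Cring. Qed.
Lemma Cmul_add_l x y z : Cmul (Cadd x y) z = Cadd (Cmul x z) (Cmul y z). Proof. Cring. Qed.
Lemma Cmul_add_r x y z : Cmul z (Cadd x y) = Cadd (Cmul z x) (Cmul z y). Proof. Cring. Qed.
Lemma Csub_diag x : Csub x x = C0. Proof. Cring. Qed.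
Lemma Cadd_sub x y : Cadd (Csub x y) y = x. Proof. Cring. Qed.

Definition toC (x : C) : Complex.C := (re x, im x).
Lemma Cmod_toC x : Cmod x = Complex.Cmod (toC x).
Proof. unfold Cmod, Complex.Cmod, toC; simpl. f_equal; ring. Qed.
Lemma toC_add x y : toC (Cadd x y) = Complex.Cplus (toC x) (toC y).
Proof. reflexivity. Qed.
Lemma toC_mul x y : toC (Cmul x y) = Complex.Cmult (toC x) (toC y).
Proof. reflexivity. Qed.

Lemma Cmod_ge0 x : 0 <= Cmod x.
Proof. rewrite Cmod_toC; apply Complex.Cmod_ge_0. Qed.
Lemma Cmod_tri x y : Cmod (Cadd x y) <= Cmod x + Cmod y.
Proof. rewrite !Cmod_toC, toC_add; apply Complex.Cmod_triangle. Qed.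
Lemma Cmod_mul x y : Cmod (Cmul x y) = Cmod x * Cmod y.
Proof. rewrite !Cmod_toC, toC_mul; apply Complex.Cmod_mult. Qed.
Lemma Cmod_C0 : Cmod C0 = 0.
Proof. unfold Cmod; simpl. replace (0*0+0*0) with 0 by ring. apply sqrt_0. Qed.
Lemma Cmod_C1 : Cmod C1 = 1.
Proof. unfold Cmod; simpl. replace (1*1+0*0) with 1 by ring. apply sqrt_1. Qed.
Lemma Cmod_opp x : Cmod (Copp x) = Cmod x.
Proof. unfold Cmod; simpl. f_equal; ring. Qed.
Lemma Cmod_eq0 x : Cmod x = 0 -> x = C0.
Proof.
  rewrite Cmod_toC; intro H. apply Complex.Cmod_eq_0 in H. unfold toC in H.
  destruct x; simpl in *. injection H; intros; subst; reflexivity.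
Qed.
Lemma re_le_Cmod x : Rabs (re x) <= Cmod x.
Proof. rewrite Cmod_toC. apply (Complex.re_le_Cmod (toC x)). Qed.
Lemma im_le_Cmod x : Rabs (im x) <= Cmod x.
Proof.
  rewrite Cmod_toC. pose proof (Complex.Rmax_Cmod (toC x)). simpl in H.
  eapply Rle_trans; [|exact H]. apply Rmax_r.
Qed.
Lemma Cmod_le_reim x : Cmod x <= Rabs (re x) + Rabs (im x).
Proof.
  unfold Cmod. destruct x as [a b]; simpl.
  apply Rsqr_incr_0_var.
  - rewrite Rsqr_sqrt by nra. unfold Rsqr.
    pose proof (Rabs_pos a); pose proof (Rabs_pos b).
    replace (a*a) with (Rabs a * Rabs a) by (rewrite <- Rabs_mult; apply Rabs_pos_eq; nra).
    replace (b*b) with (Rabs b * Rabs b) by (rewrite <- Rabs_mult; apply Rabs_pos_eq; nra).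
    nra.
  - pose proof (Rabs_pos a); pose proof (Rabs_pos b); lra.
Qed.
Lemma Cmod_sub_sym x y : Cmod (Csub x y) = Cmod (Csub y x).
Proof. replace (Csub x y) with (Copp (Csub y x)) by Cring. apply Cmod_opp. Qed.
Lemma Cmod_CR r : Cmod (CR r) = Rabs r.
Proof. unfold Cmod, CR; simpl. replace (r*r+0*0) with (r²) by (unfold Rsqr; ring). apply sqrt_Rsqr_abs. Qed.
Lemma Cmod_rev_tri x y : Rabs (Cmod x - Cmod y) <= Cmod (Csub x y).
Proof.
  pose proof (Cmod_tri (Csub x y) y). rewrite Cadd_sub in H.
  pose proof (Cmod_tri (Csub y x) x). rewrite Cadd_sub in H0.
  rewrite Cmod_sub_sym in H0. apply Rabs_le; lra.
Qed.

Definition rs {X} (f : X -> R) (l : list X) : R := Rsum (map f l).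
Definition cs {X} (f : X -> C) (l : list X) : C := Csum (map f l).

Lemma rs_nil {X} (f : X -> R) : rs f [] = 0. Proof. reflexivity. Qed.
Lemma rs_cons {X} (f : X -> R) x l : rs f (x :: l) = f x + rs f l. Proof. reflexivity. Qed.
Lemma cs_nil {X} (f : X -> C) : cs f [] = C0. Proof. reflexivity. Qed.
Lemma cs_cons {X} (f : X -> C) x l : cs f (x :: l) = Cadd (f x) (cs f l). Proof. reflexivity. Qed.

Lemma rs_app {X} (f : X -> R) l1 l2 : rs f (l1 ++ l2) = rs f l1 + rs f l2.
Proof. induction l1; simpl; rewrite ?rs_nil, ?rs_cons; [ring|]. unfold rs in *; simpl. rewrite IHl1; ring. Qed.
Lemma cs_app {X} (f : X -> C) l1 l2 : cs f (l1 ++ l2) = Cadd (cs f l1) (cs f l2).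
Proof. induction l1; simpl. rewrite cs_nil, Cadd_0_l; reflexivity.
  unfold cs in *; simpl. rewrite IHl1, Cadd_assoc; reflexivity. Qed.
Lemma rs_flat_map {X Y} (f : Y -> R) (g : X -> list Y) l :
  rs f (flat_map g l) = rs (fun x => rs f (g x)) l.
Proof. induction l; simpl; [reflexivity|]. rewrite rs_app, IHl; reflexivity. Qed.
Lemma cs_flat_map {X Y} (f : Y -> C) (g : X -> list Y) l :
  cs f (flat_map g l) = cs (fun x => cs f (g x)) l.
Proof. induction l; simpl; [reflexivity|]. rewrite cs_app, IHl; reflexivity. Qed.
Lemma rs_map {X Y} (f : Y -> R) (g : X -> Y) l : rs f (map g l) = rs (fun x => f (g x)) l.
Proof. unfold rs; rewrite map_map; reflexivity. Qed.
Lemma cs_map {X Y} (f : Y -> C) (g : X -> Y) l : cs f (map g l) = cs (fun x => f (g x)) l.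
Proof. unfold cs; rewrite map_map; reflexivity. Qed.
Lemma rs_ext_in {X} (f g : X -> R) l : (forall x, In x l -> f x = g x) -> rs f l = rs g l.
Proof. induction l; simpl; intros; [reflexivity|]. rewrite !rs_cons, H, IHl; auto. Qed.
Lemma cs_ext_in {X} (f g : X -> C) l : (forall x, In x l -> f x = g x) -> cs f l = cs g l.
Proof. induction l; simpl; intros; [reflexivity|]. rewrite !cs_cons, H, IHl; auto. Qed.
Lemma rs_ext {X} (f g : X -> R) l : (forall x, f x = g x) -> rs f l = rs g l.
Proof. intros; apply rs_ext_in; auto. Qed.
Lemma cs_ext {X} (f g : X -> C) l : (forall x, f x = g x) -> cs f l = cs g l.
Proof. intros; apply cs_ext_in; auto. Qed.
Lemma rs_le_in {X} (f g : X -> R) l : (forall x, In x l -> f x <= g x) -> rs f l <= rs g l.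
Proof. induction l; simpl; intros; rewrite ?rs_nil, ?rs_cons; [lra|].
  pose proof (H a (or_introl eq_refl)). assert (rs f l <= rs g l) by auto. lra. Qed.
Lemma rs_le {X} (f g : X -> R) l : (forall x, f x <= g x) -> rs f l <= rs g l.
Proof. intros; apply rs_le_in; auto. Qed.
Lemma rs_nonneg {X} (f : X -> R) l : (forall x, In x l -> 0 <= f x) -> 0 <= rs f l.
Proof. intros. replace 0 with (rs (fun _ : X => 0) l).
  apply rs_le_in; auto. induction l; auto. rewrite rs_cons, IHl; [ring|]. intros; apply H; simpl; auto. Qed.
Lemma rs_zero {X} (f : X -> R) l : (forall x, In x l -> f x = 0) -> rs f l = 0.
Proof. induction l; simpl; intros; [reflexivity|]. rewrite rs_cons, H, IHl; auto; ring. Qed.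
Lemma cs_zero {X} (f : X -> C) l : (forall x, In x l -> f x = C0) -> cs f l = C0.
Proof. induction l; simpl; intros; [reflexivity|]. rewrite cs_cons, H, IHl; auto. apply Cadd_0_l. Qed.
Lemma rs_plus {X} (f g : X -> R) l : rs (fun x => f x + g x) l = rs f l + rs g l.
Proof. induction l; simpl; [unfold rs; simpl; ring|]. rewrite !rs_cons, IHl; ring. Qed.
Lemma cs_plus {X} (f g : X -> C) l : cs (fun x => Cadd (f x) (g x)) l = Cadd (cs f l) (cs g l).
Proof. induction l; simpl. rewrite !cs_nil, Cadd_0_l; reflexivity. rewrite !cs_cons, IHl; Cring. Qed.
Lemma rs_scal {X} c (f : X -> R) l : rs (fun x => c * f x) l = c * rs f l.
Proof. induction l; simpl; [unfold rs; simpl; ring|]. rewrite !rs_cons, IHl; ring. Qed.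
Lemma cs_scal_l {X} c (f : X -> C) l : cs (fun x => Cmul c (f x)) l = Cmul c (cs f l).
Proof. induction l; simpl. rewrite !cs_nil, Cmul_0_r; reflexivity. rewrite !cs_cons, IHl; Cring. Qed.
Lemma cs_scal_r {X} c (f : X -> C) l : cs (fun x => Cmul (f x) c) l = Cmul (cs f l) c.
Proof. induction l; simpl. rewrite !cs_nil, Cmul_0_l; reflexivity. rewrite !cs_cons, IHl; Cring. Qed.
Lemma cs_opp {X} (f : X -> C) l : cs (fun x => Copp (f x)) l = Copp (cs f l).
Proof. induction l; simpl. apply C_ext; simpl; ring. rewrite !cs_cons, IHl; Cring. Qed.
Lemma cs_sub {X} (f g : X -> C) l : cs (fun x => Csub (f x) (g x)) l = Csub (cs f l) (cs g l).
Proof. unfold Csub. rewrite cs_plus, cs_opp. reflexivity. Qed.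
Lemma rs_swap {X Y} (f : X -> Y -> R) l1 l2 :
  rs (fun x => rs (fun y => f x y) l2) l1 = rs (fun y => rs (fun x => f x y) l1) l2.
Proof. induction l1. rewrite rs_nil. symmetry; apply rs_zero; auto.
  rewrite rs_cons, IHl1, <- rs_plus. reflexivity. Qed.
Lemma cs_swap {X Y} (f : X -> Y -> C) l1 l2 :
  cs (fun x => cs (fun y => f x y) l2) l1 = cs (fun y => cs (fun x => f x y) l1) l2.
Proof. induction l1. rewrite cs_nil. symmetry; apply cs_zero; auto.
  rewrite cs_cons, IHl1, <- cs_plus. reflexivity. Qed.
Lemma Cmod_cs {X} (f : X -> C) l : Cmod (cs f l) <= rs (fun x => Cmod (f x)) l.
Proof. induction l. rewrite cs_nil, rs_nil, Cmod_C0; lra.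
  rewrite cs_cons, rs_cons. eapply Rle_trans; [apply Cmod_tri|]. lra. Qed.
Lemma re_cs {X} (f : X -> C) l : re (cs f l) = rs (fun x => re (f x)) l.
Proof. induction l; [reflexivity|]. rewrite cs_cons, rs_cons; simpl; rewrite IHl; ring. Qed.
Lemma im_cs {X} (f : X -> C) l : im (cs f l) = rs (fun x => im (f x)) l.
Proof. induction l; [reflexivity|]. rewrite cs_cons, rs_cons; simpl; rewrite IHl; ring. Qed.
Lemma rs_via_cs {X} (f : X -> R) l : rs f l = re (cs (fun x => CR (f x)) l).
Proof. rewrite re_cs. reflexivity. Qed.
Lemma rs_abs {X} (f : X -> R) l : Rabs (rs f l) <= rs (fun x => Rabs (f x)) l.
Proof. induction l. rewrite !rs_nil, Rabs_R0; lra.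
  rewrite !rs_cons. eapply Rle_trans; [apply Rabs_triang|]. lra. Qed.

Lemma seq_S_app k N : seq k (S N) = seq k N ++ [(k + N)%nat].
Proof. rewrite seq_S. reflexivity. Qed.
Lemma rs_seq_S {f : nat -> R} N : rs f (seq 0 (S N)) = rs f (seq 0 N) + f N.
Proof. rewrite seq_S_app, rs_app. simpl. unfold rs; simpl. ring. Qed.
Lemma cs_seq_S (f : nat -> C) N : cs f (seq 0 (S N)) = Cadd (cs f (seq 0 N)) (f N).
Proof. rewrite seq_S_app, cs_app. simpl. unfold cs; simpl. rewrite Cadd_0_r. reflexivity. Qed.
Lemma seq_shift_S k N : seq (S k) N = map S (seq k N).
Proof. rewrite <- seq_shift. reflexivity. Qed.
Lemma rs_seq_shift (f : nat -> R) N : rs f (seq 0 (S N)) = f 0%nat + rs (fun k => f (S k)) (seq 0 N).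
Proof. simpl. rewrite rs_cons, seq_shift_S, rs_map. reflexivity. Qed.
Lemma cs_seq_shift (f : nat -> C) N : cs f (seq 0 (S N)) = Cadd (f 0%nat) (cs (fun k => f (S k)) (seq 0 N)).
Proof. simpl. rewrite cs_cons, seq_shift_S, cs_map. reflexivity. Qed.
Lemma sum_f_R0_rs f N : sum_f_R0 f N = rs f (seq 0 (S N)).
Proof. induction N; simpl. unfold rs; simpl; ring. rewrite IHN. rewrite (rs_seq_S (S N)). reflexivity. Qed.

Lemma cs_reindex (g : nat -> nat -> C) N :
  cs (fun d => cs (fun i => g i (d - i)%nat) (seq 0 (S d))) (seq 0 (S N)) =
  cs (fun i => cs (fun j => g i j) (seq 0 (S (N - i)))) (seq 0 (S N)).
Proof.
  revert g. induction N; intros g.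
  - reflexivity.
  - set (L := fun d => cs (fun i => g i (d - i)%nat) (seq 0 (S d))).
    rewrite (cs_seq_S L (S N)). unfold L at 1. rewrite IHN. unfold L.
    set (Rf := fun i => cs (fun j => g i j) (seq 0 (S (S N - i)))).
    rewrite (cs_seq_S Rf (S N)). unfold Rf at 2. replace (S N - S N)%nat with 0%nat by lia.
    rewrite (cs_seq_S (fun i => g i (S N - i)%nat) (S N)).
    replace (S N - S N)%nat with 0%nat by lia.
    assert (E : cs Rf (seq 0 (S N)) = Cadd (cs (fun i => cs (fun j => g i j) (seq 0 (S (N - i)))) (seq 0 (S N)))
       (cs (fun i => g i (S N - i)%nat) (seq 0 (S N)))).
    { rewrite <- cs_plus. apply cs_ext_in. intros i Hi. apply in_seq in Hi. unfold Rf.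
      replace (S (S N - i)) with (S (S (N - i))) by lia.
      rewrite (cs_seq_S _ (S (N-i))). f_equal. f_equal. lia. }
    rewrite E. rewrite Cadd_assoc. f_equal. unfold cs; simpl. rewrite Cadd_0_r; reflexivity.
Qed.
Lemma rs_reindex (g : nat -> nat -> R) N :
  rs (fun d => rs (fun i => g i (d - i)%nat) (seq 0 (S d))) (seq 0 (S N)) =
  rs (fun i => rs (fun j => g i j) (seq 0 (S (N - i)))) (seq 0 (S N)).
Proof.
  revert g. induction N; intros g.
  - reflexivity.
  - set (L := fun d => rs (fun i => g i (d - i)%nat) (seq 0 (S d))).
    rewrite (@rs_seq_S L (S N)). unfold L at 1. rewrite IHN. unfold L.
    set (Rf := fun i => rs (fun j => g i j) (seq 0 (S (S N - i)))).
    rewrite (@rs_seq_S Rf (S N)). unfold Rf at 2. replace (S N - S N)%nat with 0%nat by lia.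
    rewrite (@rs_seq_S (fun i => g i (S N - i)%nat) (S N)).
    replace (S N - S N)%nat with 0%nat by lia.
    assert (E : rs Rf (seq 0 (S N)) = (rs (fun i => rs (fun j => g i j) (seq 0 (S (N - i)))) (seq 0 (S N)))
       + (rs (fun i => g i (S N - i)%nat) (seq 0 (S N)))).
    { rewrite <- rs_plus. apply rs_ext_in. intros i Hi. apply in_seq in Hi. unfold Rf.
      replace (S (S N - i)) with (S (S (N - i))) by lia.
      rewrite (@rs_seq_S _ (S (N-i))). f_equal. f_equal. lia. }
    rewrite E. unfold rs; simpl. ring.
Qed.

Lemma re_Csub x y : re (Csub x y) = re x - re y. Proof. reflexivity. Qed.
Lemma im_Csub x y : im (Csub x y) = im x - im y. Proof. reflexivity. Qed.

Definition cvC (u : nat -> C) (l : C) : Prop :=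
  forall eps, eps > 0 -> exists N, forall k, (k >= N)%nat -> Cmod (Csub (u k) l) < eps.

Lemma Cmod_small_eq x : (forall eps, eps > 0 -> Cmod x < eps) -> x = C0.
Proof.
  intros H. apply Cmod_eq0. pose proof (Cmod_ge0 x).
  destruct (Rle_lt_or_eq_dec _ _ H0); auto. specialize (H _ r). lra.
Qed.

Lemma cvC_unique u l1 l2 : cvC u l1 -> cvC u l2 -> l1 = l2.
Proof.
  intros H1 H2. assert (Csub l1 l2 = C0).
  { apply Cmod_small_eq. intros eps He.
    destruct (H1 (eps/2)) as [N1 HN1]; [lra|]. destruct (H2 (eps/2)) as [N2 HN2]; [lra|].
    specialize (HN1 (N1+N2)%nat ltac:(lia)). specialize (HN2 (N1+N2)%nat ltac:(lia)).
    replace (Csub l1 l2) with (Cadd (Csub (u (N1+N2)%nat) l2) (Copp (Csub (u (N1+N2)%nat) l1))) by Cring.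
    eapply Rle_lt_trans; [apply Cmod_tri|]. rewrite Cmod_opp. lra. }
  replace l1 with (Cadd (Csub l1 l2) l2) by Cring. rewrite H. apply Cadd_0_l.
Qed.

Lemma cvC_plus u v l m : cvC u l -> cvC v m -> cvC (fun k => Cadd (u k) (v k)) (Cadd l m).
Proof.
  intros H1 H2 eps He.
  destruct (H1 (eps/2)) as [N1 HN1]; [lra|]. destruct (H2 (eps/2)) as [N2 HN2]; [lra|].
  exists (N1+N2)%nat. intros k Hk.
  replace (Csub (Cadd (u k) (v k)) (Cadd l m)) with (Cadd (Csub (u k) l) (Csub (v k) m)) by Cring.
  eapply Rle_lt_trans; [apply Cmod_tri|]. specialize (HN1 k ltac:(lia)). specialize (HN2 k ltac:(lia)). lra.
Qed.

Lemma cvC_scal c u l : cvC u l -> cvC (fun k => Cmul c (u k)) (Cmul c l).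
Proof.
  intros H eps He. destruct (H (eps / (Cmod c + 1))) as [N HN].
  { apply Rdiv_lt_0_compat; auto. pose proof (Cmod_ge0 c); lra. }
  exists N. intros k Hk. specialize (HN k Hk).
  replace (Csub (Cmul c (u k)) (Cmul c l)) with (Cmul c (Csub (u k) l)) by Cring.
  rewrite Cmod_mul. pose proof (Cmod_ge0 c). pose proof (Cmod_ge0 (Csub (u k) l)).
  apply Rmult_lt_compat_l with (r := Cmod c + 1) in HN; [|lra].
  unfold Rdiv in HN. rewrite <- Rmult_assoc, (Rmult_comm _ eps), Rmult_assoc, Rinv_r, Rmult_1_r in HN by lra.
  nra.
Qed.

Lemma cvC_opp u l : cvC u l -> cvC (fun k => Copp (u k)) (Copp l).
Proof.
  intros H eps He. destruct (H eps He) as [N HN]. exists N. intros k Hk.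
  replace (Csub (Copp (u k)) (Copp l)) with (Copp (Csub (u k) l)) by Cring.
  rewrite Cmod_opp; auto.
Qed.

Lemma cvC_sub u v l m : cvC u l -> cvC v m -> cvC (fun k => Csub (u k) (v k)) (Csub l m).
Proof. intros. apply cvC_plus; auto. apply cvC_opp; auto. Qed.

Lemma cvC_ext u v l : (forall k, u k = v k) -> cvC u l -> cvC v l.
Proof. intros E H eps He. destruct (H eps He) as [N HN]. exists N; intros; rewrite <- E; auto. Qed.

Lemma cvC_ev u l N0 : (forall k, (k >= N0)%nat -> u k = l) -> cvC u l.
Proof. intros H eps He. exists N0. intros k Hk. rewrite H, Csub_diag, Cmod_C0; auto; lra. Qed.

Lemma cvC_cs {X} (f : nat -> X -> C) (g : X -> C) l :
  (forall x, In x l -> cvC (fun k => f k x) (g x)) -> cvC (fun k => cs (f k) l) (cs g l).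
Proof.
  induction l; intros H.
  - apply cvC_ev with 0%nat. intros; reflexivity.
  - apply cvC_ext with (fun k => Cadd (f k a) (cs (f k) l)). intros; reflexivity.
    rewrite cs_cons. apply cvC_plus. apply H; simpl; auto. apply IHl. intros; apply H; simpl; auto.
Qed.

Lemma cvC_cauchy u :
  (forall eps, eps > 0 -> exists N, forall k k', (k >= N)%nat -> (k' >= N)%nat -> Cmod (Csub (u k) (u k')) < eps) ->
  exists l, cvC u l.
Proof.
  intros H.
  assert (Hr : Cauchy_crit (fun k => re (u k))).
  { intros eps He. destruct (H eps He) as [N HN]. exists N. intros k k' Hk Hk'.
    unfold R_dist. eapply Rle_lt_trans; [|apply (HN k k' Hk Hk')].
    eapply Rle_trans; [|apply re_le_Cmod]. simpl. right; f_equal; ring. }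
  assert (Hi : Cauchy_crit (fun k => im (u k))).
  { intros eps He. destruct (H eps He) as [N HN]. exists N. intros k k' Hk Hk'.
    unfold R_dist. eapply Rle_lt_trans; [|apply (HN k k' Hk Hk')].
    eapply Rle_trans; [|apply im_le_Cmod]. simpl. right; f_equal; ring. }
  destruct (R_complete _ Hr) as [lr Hlr]. destruct (R_complete _ Hi) as [li Hli].
  exists (mkC lr li). intros eps He.
  destruct (Hlr (eps/2)) as [N1 HN1]; [lra|]. destruct (Hli (eps/2)) as [N2 HN2]; [lra|].
  exists (N1+N2)%nat. intros k Hk. eapply Rle_lt_trans; [apply Cmod_le_reim|].
  specialize (HN1 k ltac:(lia)). specialize (HN2 k ltac:(lia)). unfold R_dist, Rminus in *. simpl. lra.
Qed.

Lemma cvC_Cmod u l : cvC u l -> Un_cv (fun k => Cmod (u k)) (Cmod l).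
Proof.
  intros H eps He. destruct (H eps He) as [N HN]. exists N. intros k Hk. unfold R_dist.
  eapply Rle_lt_trans; [apply Cmod_rev_tri|]. auto.
Qed.

Lemma Un_cv_le u l B : Un_cv u l -> (forall k, u k <= B) -> l <= B.
Proof.
  intros H Hb. destruct (Rle_or_lt l B); auto.
  destruct (H (l - B)) as [N HN]; [lra|]. specialize (HN N (le_n _)). specialize (Hb N).
  unfold R_dist in HN. apply Rabs_def2 in HN. lra.
Qed.

Lemma Un_cv_rs {X} (f : nat -> X -> R) (g : X -> R) l :
  (forall x, In x l -> Un_cv (fun k => f k x) (g x)) -> Un_cv (fun k => rs (f k) l) (rs g l).
Proof.
  induction l; intros H.
  - intros eps He. exists 0%nat. intros. unfold R_dist, rs; simpl. rewrite Rminus_0_r, Rabs_R0. lra.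
  - rewrite rs_cons. apply (Un_cv_ext (fun k => f k a + rs (f k) l)). intros; rewrite rs_cons; reflexivity.
    apply CV_plus. apply H; simpl; auto. apply IHl. intros; apply H; simpl; auto.
Qed.

Lemma Un_cv_scal c u l : Un_cv u l -> Un_cv (fun k => c * u k) (c * l).
Proof. intros. apply CV_mult; auto. intros eps He; exists 0%nat; intros; unfold R_dist; rewrite Rminus_diag, Rabs_R0; lra. Qed.

Definition psC (s : nat -> C) (N : nat) : C := cs s (seq 0 (S N)).

Lemma Cinf_cvC s l : Cinfinite_sum s l <-> cvC (psC s) l.
Proof.
  unfold Cinfinite_sum, infinite_sum, psC. split.
  - intros [Hr Hi] eps He.
    destruct (Hr (eps/2)) as [N1 HN1]; [lra|]. destruct (Hi (eps/2)) as [N2 HN2]; [lra|].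
    exists (N1+N2)%nat. intros k Hk. eapply Rle_lt_trans; [apply Cmod_le_reim|].
    specialize (HN1 k ltac:(lia)). specialize (HN2 k ltac:(lia)). unfold R_dist in *. rewrite re_Csub, im_Csub.
    rewrite re_cs, im_cs. rewrite !sum_f_R0_rs in *. lra.
  - intros H. split; intros eps He; destruct (H eps He) as [N HN]; exists N; intros k Hk;
    specialize (HN k Hk); unfold R_dist; rewrite sum_f_R0_rs.
    + eapply Rle_lt_trans; [|apply HN]. eapply Rle_trans; [|apply re_le_Cmod]. rewrite re_Csub, re_cs. right; f_equal; ring.
    + eapply Rle_lt_trans; [|apply HN]. eapply Rle_trans; [|apply im_le_Cmod]. rewrite im_Csub, im_cs. right; f_equal; ring.
Qed.

Lemma infsum_bounded (f : nat -> R) B : (forall d, 0 <= f d) -> (forall N, rs f (seq 0 (S N)) <= B) ->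
  exists l, infinite_sum f l /\ l <= B.
Proof.
  intros Hpos HB.
  assert (Hg : Un_growing (fun N => sum_f_R0 f N)).
  { intros N. simpl. specialize (Hpos (S N)). lra. }
  assert (Hbd : bound (EUn (fun N => sum_f_R0 f N))).
  { exists B. intros x [N ->]. rewrite sum_f_R0_rs. auto. }
  destruct (growing_cv _ Hg Hbd) as [l Hl]. exists l. split.
  - exact Hl.
  - apply Un_cv_le with (fun N => sum_f_R0 f N); auto. intros; rewrite sum_f_R0_rs; auto.
Qed.

Lemma infsum_partial_le (f : nat -> R) l N : (forall d, 0 <= f d) -> infinite_sum f l ->
  rs f (seq 0 (S N)) <= l.
Proof.
  intros Hpos Hl. destruct (Rle_or_lt (rs f (seq 0 (S N))) l); auto.
  destruct (Hl (rs f (seq 0 (S N)) - l)) as [M HM]; [lra|].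
  specialize (HM (M + N)%nat ltac:(lia)). unfold R_dist in HM. apply Rabs_def2 in HM.
  assert (rs f (seq 0 (S N)) <= sum_f_R0 f (M + N)).
  { rewrite sum_f_R0_rs. replace (S (M+N)) with (S N + M)%nat by lia. rewrite seq_app, rs_app.
    pose proof (rs_nonneg f (seq (0 + S N) M)). assert (0 <= rs f (seq (0 + S N) M)) by auto. lra. }
  lra.
Qed.

Lemma words_0 m : words m 0 = [[]]. Proof. reflexivity. Qed.
Lemma cs_words_S m d (f : list nat -> C) :
  cs f (words m (S d)) = cs (fun w => cs (fun i => f (i :: w)) (seq 0 m)) (words m d).
Proof. simpl. rewrite cs_flat_map. apply cs_ext; intro w. rewrite cs_map. reflexivity. Qed.
Lemma rs_words_S m d (f : list nat -> R) :
  rs f (words m (S d)) = rs (fun w => rs (fun i => f (i :: w)) (seq 0 m)) (words m d).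
Proof. simpl. rewrite rs_flat_map. apply rs_ext; intro w. rewrite rs_map. reflexivity. Qed.

Lemma In_words m d w : In w (words m d) <-> length w = d /\ valid_word m w.
Proof.
  revert w; induction d; intros w; simpl.
  - split. intros [<-|[]]. split; auto. constructor.
    intros [H _]. destruct w; simpl in H; try lia. auto.
  - rewrite in_flat_map. split.
    + intros [w' [Hw' Hin]]. apply in_map_iff in Hin. destruct Hin as [i [<- Hi]].
      apply in_seq in Hi. apply IHd in Hw'. destruct Hw'. simpl. split; [lia|]. constructor; auto; lia.
    + intros [Hl Hv]. destruct w as [|i w']; simpl in Hl; try lia. inversion Hv; subst.
      exists w'. split. apply IHd. split; auto. apply in_map_iff. exists i. split; auto. apply in_seq; lia.
Qed.

Lemma cs_words_S' m d (f : list nat -> C) :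
  cs f (words m (S d)) = cs (fun w => cs (fun i => f (i :: w)) (seq 0 m)) (words m d).
Proof. simpl. rewrite cs_flat_map. apply cs_ext; intro w. rewrite cs_map. reflexivity. Qed.

Lemma cs_split m d (psi : list nat -> list nat -> C) :
  cs (fun w => cs (fun k => psi (firstn k w) (skipn k w)) (seq 0 (S (length w)))) (words m d)
  = cs (fun i => cs (fun u => cs (fun v => psi u v) (words m (d - i))) (words m i)) (seq 0 (S d)).
Proof.
  revert psi. induction d; intros psi.
  - unfold cs; simpl. rewrite !Cadd_0_r. reflexivity.
  - rewrite cs_words_S'.
    rewrite (cs_seq_shift _ (S d)).
    rewrite words_0. replace (S d - 0)%nat with (S d) by lia.
    transitivity (Cadd (cs (fun w' => cs (fun i => psi [] (i :: w')) (seq 0 m)) (words m d))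
       (cs (fun w' => cs (fun k => cs (fun i => psi (i :: firstn k w') (skipn k w')) (seq 0 m)) (seq 0 (S (length w')))) (words m d))).
    { rewrite <- cs_plus. apply cs_ext; intro w'. rewrite <- cs_swap. rewrite <- cs_plus.
      apply cs_ext; intro i. simpl length. rewrite cs_seq_shift. reflexivity. }
    f_equal.
    + rewrite cs_cons, cs_nil, Cadd_0_r, cs_words_S'. reflexivity.
    + rewrite (IHd (fun u v => cs (fun i => psi (i :: u) v) (seq 0 m))).
      apply cs_ext_in. intros i' Hi'. apply in_seq in Hi'.
      replace (S d - S i')%nat with (d - i')%nat by lia.
      rewrite cs_words_S'. apply cs_ext; intro u. symmetry. apply cs_swap.
Qed.

Lemma rs_split m d (psi : list nat -> list nat -> R) :
  rs (fun w => rs (fun k => psi (firstn k w) (skipn k w)) (seq 0 (S (length w)))) (words m d)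
  = rs (fun i => rs (fun u => rs (fun v => psi u v) (words m (d - i))) (words m i)) (seq 0 (S d)).
Proof.
  pose proof (cs_split m d (fun u v => CR (psi u v))).
  apply (f_equal re) in H. rewrite !re_cs in H.
  etransitivity; [|etransitivity; [exact H|]].
  - apply rs_ext; intro w. rewrite re_cs. reflexivity.
  - apply rs_ext; intro i. rewrite re_cs. apply rs_ext; intro u. rewrite re_cs. reflexivity.
Qed.

Definition sadd (P Q : ser) : ser := fun w => Cadd (P w) (Q w).
Definition ssub (P Q : ser) : ser := fun w => Csub (P w) (Q w).
Definition sscal (c : C) (P : ser) : ser := fun w => Cmul c (P w).
Definition szero : ser := fun _ => C0.
Definition mono (q : list nat) (T : nat -> ser) : ser := ser_prod (map T q).

Lemma mono_nil T : mono [] T = ser_one. Proof. reflexivity. Qed.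
Lemma mono_cons x q T : mono (x :: q) T = ser_mul (T x) (mono q T). Proof. reflexivity. Qed.

Ltac sext := apply functional_extensionality; intro.

Lemma smul_add_l P Q R : ser_mul (sadd P Q) R = sadd (ser_mul P R) (ser_mul Q R).
Proof. sext. unfold ser_mul, sadd. fold (cs (fun k => Cmul (Cadd (P (firstn k x)) (Q (firstn k x))) (R (skipn k x))) (seq 0 (S (length x)))).
  fold (cs (fun k => Cmul (P (firstn k x)) (R (skipn k x))) (seq 0 (S (length x)))).
  fold (cs (fun k => Cmul (Q (firstn k x)) (R (skipn k x))) (seq 0 (S (length x)))).
  rewrite <- cs_plus. apply cs_ext; intro; Cring. Qed.
Lemma smul_add_r P Q R : ser_mul R (sadd P Q) = sadd (ser_mul R P) (ser_mul R Q).
Proof. sext. unfold ser_mul, sadd. fold (cs (fun k => Cmul (R (firstn k x)) (Cadd (P (skipn k x)) (Q (skipn k x)))) (seq 0 (S (length x)))).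
  fold (cs (fun k => Cmul (R (firstn k x)) (P (skipn k x))) (seq 0 (S (length x)))).
  fold (cs (fun k => Cmul (R (firstn k x)) (Q (skipn k x))) (seq 0 (S (length x)))).
  rewrite <- cs_plus. apply cs_ext; intro; Cring. Qed.
Lemma smul_sub_l P Q R : ser_mul (ssub P Q) R = ssub (ser_mul P R) (ser_mul Q R).
Proof. sext. unfold ser_mul, ssub. fold (cs (fun k => Cmul (Csub (P (firstn k x)) (Q (firstn k x))) (R (skipn k x))) (seq 0 (S (length x)))).
  fold (cs (fun k => Cmul (P (firstn k x)) (R (skipn k x))) (seq 0 (S (length x)))).
  fold (cs (fun k => Cmul (Q (firstn k x)) (R (skipn k x))) (seq 0 (S (length x)))).
  rewrite <- cs_sub. apply cs_ext; intro; Cring. Qed.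
Lemma smul_sub_r P Q R : ser_mul R (ssub P Q) = ssub (ser_mul R P) (ser_mul R Q).
Proof. sext. unfold ser_mul, ssub. fold (cs (fun k => Cmul (R (firstn k x)) (Csub (P (skipn k x)) (Q (skipn k x)))) (seq 0 (S (length x)))).
  fold (cs (fun k => Cmul (R (firstn k x)) (P (skipn k x))) (seq 0 (S (length x)))).
  fold (cs (fun k => Cmul (R (firstn k x)) (Q (skipn k x))) (seq 0 (S (length x)))).
  rewrite <- cs_sub. apply cs_ext; intro; Cring. Qed.
Lemma smul_scal_l c P Q : ser_mul (sscal c P) Q = sscal c (ser_mul P Q).
Proof. sext. unfold ser_mul, sscal. fold (cs (fun k => Cmul (Cmul c (P (firstn k x))) (Q (skipn k x))) (seq 0 (S (length x)))).
  fold (cs (fun k => Cmul (P (firstn k x)) (Q (skipn k x))) (seq 0 (S (length x)))).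
  rewrite <- cs_scal_l. apply cs_ext; intro; Cring. Qed.
Lemma smul_scal_r c P Q : ser_mul P (sscal c Q) = sscal c (ser_mul P Q).
Proof. sext. unfold ser_mul, sscal. fold (cs (fun k => Cmul (P (firstn k x)) (Cmul c (Q (skipn k x)))) (seq 0 (S (length x)))).
  fold (cs (fun k => Cmul (P (firstn k x)) (Q (skipn k x))) (seq 0 (S (length x)))).
  rewrite <- cs_scal_l. apply cs_ext; intro; Cring. Qed.

Lemma ser_mul_cs P Q w : ser_mul P Q w = cs (fun k => Cmul (P (firstn k w)) (Q (skipn k w))) (seq 0 (S (length w))).
Proof. reflexivity. Qed.

Lemma smul_one_l P : ser_mul ser_one P = P.
Proof.
  sext. rewrite ser_mul_cs. rewrite cs_seq_shift. simpl firstn. simpl skipn. unfold ser_one at 1.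
  rewrite Cmul_1_l. rewrite cs_zero. apply Cadd_0_r.
  intros k Hk. apply in_seq in Hk. destruct x; simpl in Hk; [lia|]. simpl. apply Cmul_0_l.
Qed.

Lemma smul_one_r P : ser_mul P ser_one = P.
Proof.
  sext. rewrite ser_mul_cs. rewrite cs_seq_S. rewrite firstn_all, skipn_all. simpl ser_one.
  rewrite Cmul_1_r. rewrite cs_zero. apply Cadd_0_l.
  intros k Hk. apply in_seq in Hk. unfold ser_one.
  destruct (skipn k x) eqn:E. apply (f_equal (@length nat)) in E. rewrite length_skipn in E. simpl in E. lia.
  apply Cmul_0_r.
Qed.

Lemma smul_assoc P Q R : ser_mul P (ser_mul Q R) = ser_mul (ser_mul P Q) R.
Proof.
  sext. rename x into w. rewrite !ser_mul_cs.
  set (g := fun j l => Cmul (Cmul (P (firstn j w)) (Q (firstn l (skipn j w)))) (R (skipn l (skipn j w)))).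
  transitivity (cs (fun j => cs (fun l => g j l) (seq 0 (S (length w - j)))) (seq 0 (S (length w)))).
  - apply cs_ext_in. intros j Hj. rewrite ser_mul_cs, length_skipn. rewrite <- cs_scal_l.
    apply cs_ext; intro l. unfold g. apply Cmul_assoc.
  - rewrite <- cs_reindex. apply cs_ext_in. intros k Hk. apply in_seq in Hk.
    rewrite ser_mul_cs. rewrite firstn_length_le by lia. rewrite <- cs_scal_r.
    apply cs_ext_in. intros j Hj. apply in_seq in Hj. unfold g.
    rewrite firstn_firstn. replace (Nat.min j k) with j by lia.
    rewrite firstn_skipn_comm. replace (j + (k - j))%nat with k by lia.
    rewrite skipn_skipn. replace (k - j + j)%nat with k by lia. reflexivity.
Qed.

Lemma mono_app u v T : mono (u ++ v) T = ser_mul (mono u T) (mono v T).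
Proof.
  induction u; simpl app. rewrite mono_nil, smul_one_l; reflexivity.
  rewrite !mono_cons, IHu, smul_assoc; reflexivity.
Qed.

Lemma valid_app m u v : valid_word m (u ++ v) <-> valid_word m u /\ valid_word m v.
Proof. apply Forall_app. Qed.

Lemma supp_mul m P Q : supported m P -> supported m Q -> supported m (ser_mul P Q).
Proof.
  intros HP HQ w Hw. rewrite ser_mul_cs. apply cs_zero. intros k _.
  destruct (Forall_dec (fun x => (x < m)%nat) (fun x => lt_dec x m) (firstn k w)) as [H1|H1].
  - destruct (Forall_dec (fun x => (x < m)%nat) (fun x => lt_dec x m) (skipn k w)) as [H2|H2].
    + exfalso. apply Hw. rewrite <- (firstn_skipn k w). apply valid_app. auto.
    + rewrite HQ; auto. apply Cmul_0_r.
  - rewrite HP; auto. apply Cmul_0_l.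
Qed.
Lemma supp_one m : supported m ser_one.
Proof. intros w Hw. destruct w; auto. exfalso; apply Hw; constructor. Qed.
Lemma supp_add m P Q : supported m P -> supported m Q -> supported m (sadd P Q).
Proof. intros HP HQ w Hw. unfold sadd. rewrite HP, HQ; auto. apply Cadd_0_l. Qed.
Lemma supp_sub m P Q : supported m P -> supported m Q -> supported m (ssub P Q).
Proof. intros HP HQ w Hw. unfold ssub. rewrite HP, HQ; auto. apply Csub_diag. Qed.
Lemma supp_scal m c P : supported m P -> supported m (sscal c P).
Proof. intros HP w Hw. unfold sscal. rewrite HP; auto. apply Cmul_0_r. Qed.
Lemma supp_mono m q T : (forall x, In x q -> supported m (T x)) -> supported m (mono q T).
Proof.
  induction q; intros H. apply supp_one. rewrite mono_cons. apply supp_mul.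
  apply H; simpl; auto. apply IHq; intros; apply H; simpl; auto.
Qed.

Definition blk m (P : ser) d := rs (fun w => Cmod (P w)) (words m d).
Definition pn m r (P : ser) N := rs (fun d => r ^ d * blk m P d) (seq 0 (S N)).
Definition NB m r (P : ser) B := supported m P /\ forall N, pn m r P N <= B.

Lemma blk_nonneg m P d : 0 <= blk m P d.
Proof. apply rs_nonneg; intros; apply Cmod_ge0. Qed.
Lemma pn_nonneg m r P N : 0 <= r -> 0 <= pn m r P N.
Proof. intros. apply rs_nonneg; intros. apply Rmult_le_pos. apply pow_le; auto. apply blk_nonneg. Qed.
Lemma pn_S m r P N : pn m r P (S N) = pn m r P N + r ^ (S N) * blk m P (S N).
Proof. unfold pn. rewrite (@rs_seq_S _ (S N)). reflexivity. Qed.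
Lemma pn_mono m r P N N' : 0 <= r -> (N <= N')%nat -> pn m r P N <= pn m r P N'.
Proof.
  intros Hr H. induction H. lra. rewrite pn_S.
  pose proof (pow_le r (S m0) Hr). pose proof (blk_nonneg m P (S m0)). nra.
Qed.
Lemma NB_nonneg m r P B : 0 <= r -> NB m r P B -> 0 <= B.
Proof. intros Hr [_ H]. eapply Rle_trans; [apply (pn_nonneg m r P 0 Hr)|]. auto. Qed.
Lemma NB_weaken m r P B B' : NB m r P B -> B <= B' -> NB m r P B'.
Proof. intros [Hs H] HB. split; auto. intros N; specialize (H N); lra. Qed.
Lemma blk_bound m r P B d : 0 <= r -> NB m r P B -> r ^ d * blk m P d <= B.
Proof.
  intros Hr [_ H]. eapply Rle_trans; [|apply (H d)].
  destruct d. unfold pn; simpl. unfold rs; simpl; lra.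
  rewrite pn_S. pose proof (pn_nonneg m r P d Hr). lra.
Qed.
Lemma coef_bound m r P B w : 0 <= r -> NB m r P B -> valid_word m w -> r ^ (length w) * Cmod (P w) <= B.
Proof.
  intros Hr HB Hw. eapply Rle_trans; [|apply (blk_bound m r P B (length w) Hr HB)].
  apply Rmult_le_compat_l. apply pow_le; auto.
  assert (In w (words m (length w))) by (apply In_words; auto).
  unfold blk. revert H. generalize (words m (length w)). intros l Hin.
  induction l; destruct Hin. subst. rewrite rs_cons. pose proof (rs_nonneg (fun w => Cmod (P w)) l). 
  assert (0 <= rs (fun w0 => Cmod (P w0)) l) by (apply H; intros; apply Cmod_ge0). lra.
  rewrite rs_cons. pose proof (Cmod_ge0 (P a)). specialize (IHl H). lra.
Qed.

Lemma NB_add m r P Q B1 B2 : 0 <= r -> NB m r P B1 -> NB m r Q B2 -> NB m r (sadd P Q) (B1 + B2).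
Proof.
  intros Hr [HsP HP] [HsQ HQ]. split. apply supp_add; auto.
  intros N. specialize (HP N). specialize (HQ N). eapply Rle_trans; [|apply Rplus_le_compat; eauto].
  unfold pn. rewrite <- rs_plus. apply rs_le; intro d. rewrite <- Rmult_plus_distr_l.
  apply Rmult_le_compat_l. apply pow_le; auto. unfold blk. rewrite <- rs_plus. apply rs_le; intro.
  apply Cmod_tri.
Qed.
Lemma NB_sub m r P Q B1 B2 : 0 <= r -> NB m r P B1 -> NB m r Q B2 -> NB m r (ssub P Q) (B1 + B2).
Proof.
  intros Hr [HsP HP] [HsQ HQ]. split. apply supp_sub; auto.
  intros N. specialize (HP N). specialize (HQ N). eapply Rle_trans; [|apply Rplus_le_compat; eauto].
  unfold pn. rewrite <- rs_plus. apply rs_le; intro d. rewrite <- Rmult_plus_distr_l.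
  apply Rmult_le_compat_l. apply pow_le; auto. unfold blk. rewrite <- rs_plus. apply rs_le; intro.
  unfold ssub, Csub. eapply Rle_trans; [apply Cmod_tri|]. rewrite Cmod_opp. lra.
Qed.
Lemma NB_scal m r c P B : 0 <= r -> NB m r P B -> NB m r (sscal c P) (Cmod c * B).
Proof.
  intros Hr [HsP HP]. split. apply supp_scal; auto. intros N.
  eapply Rle_trans; [|apply Rmult_le_compat_l; [apply Cmod_ge0|apply (HP N)]].
  unfold pn. rewrite <- rs_scal. apply rs_le; intro d. unfold blk.
  rewrite (rs_ext (fun w => Cmod (sscal c P w)) (fun w => Cmod c * Cmod (P w))) by (intro; apply Cmod_mul).
  rewrite rs_scal. right; ring.
Qed.
Lemma NB_zero m r : NB m r szero 0.
Proof.
  split. intros w _; reflexivity. intros N. right. apply rs_zero. intros d _. unfold blk.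
  rewrite rs_zero. ring. intros; apply Cmod_C0.
Qed.

Lemma blk_mul m P Q d : blk m (ser_mul P Q) d <= rs (fun i => blk m P i * blk m Q (d - i)) (seq 0 (S d)).
Proof.
  unfold blk. eapply Rle_trans.
  - apply rs_le_in. intros w Hw. rewrite ser_mul_cs. apply Cmod_cs.
  - rewrite (rs_ext_in _ (fun w => rs (fun k => Cmod (P (firstn k w)) * Cmod (Q (skipn k w))) (seq 0 (S (length w))))).
    pose proof (rs_split m d (fun u v => Cmod (P u) * Cmod (Q v))) as Hs. cbv beta in Hs.
    rewrite Hs. right. apply rs_ext; intro i. rewrite Rmult_comm, <- rs_scal. apply rs_ext; intro u.
    rewrite Rmult_comm, <- rs_scal. reflexivity.
    intros w _. apply rs_ext; intro k. apply Cmod_mul.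
Qed.

Lemma NB_mul m r P Q B1 B2 : 0 <= r -> NB m r P B1 -> NB m r Q B2 -> NB m r (ser_mul P Q) (B1 * B2).
Proof.
  intros Hr [HsP HP] [HsQ HQ]. split. apply supp_mul; auto. intros N.
  unfold pn. eapply Rle_trans.
  { apply rs_le; intro d. apply Rmult_le_compat_l. apply pow_le; auto. apply blk_mul. }
  rewrite (rs_ext _ (fun d => rs (fun i => (fun i j => (r ^ i * blk m P i) * (r ^ j * blk m Q j)) i (d - i)%nat) (seq 0 (S d)))).
  2: { intro d. rewrite <- rs_scal. apply rs_ext_in. intros i Hi. apply in_seq in Hi.
       replace (r ^ d) with (r ^ i * r ^ (d - i)) by (rewrite <- pow_add; f_equal; lia). ring. }
  pose proof (rs_reindex (fun i j => (r ^ i * blk m P i) * (r ^ j * blk m Q j)) N) as Hri.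
  cbv beta in Hri. cbv beta. rewrite Hri.
  apply Rle_trans with (rs (fun i => (r ^ i * blk m P i) * B2) (seq 0 (S N))).
  - apply rs_le; intro i. rewrite rs_scal. apply Rmult_le_compat_l.
    apply Rmult_le_pos; [apply pow_le; auto| apply blk_nonneg]. apply HQ.
  - rewrite (rs_ext _ (fun i => B2 * (r ^ i * blk m P i))) by (intro; ring). rewrite rs_scal.
    pose proof (NB_nonneg m r Q B2 Hr (conj HsQ HQ)). specialize (HP N). unfold pn in HP. nra.
Qed.

Lemma blk_one_0 m : blk m ser_one 0 = 1.
Proof. unfold blk. rewrite words_0. rewrite rs_cons, rs_nil. simpl. rewrite Cmod_C1. ring. Qed.
Lemma blk_zero_words m P d : (forall w, length w = d -> P w = C0) -> blk m P d = 0.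
Proof. intros H. unfold blk. apply rs_zero. intros w Hw. apply In_words in Hw. rewrite H; [apply Cmod_C0|tauto]. Qed.

Lemma pn_only0 m r P N : (forall d, (d > 0)%nat -> blk m P d = 0) -> pn m r P N = blk m P 0.
Proof.
  intros H. induction N. unfold pn, rs; simpl; ring. rewrite pn_S, IHN, (H (S N)) by lia. ring.
Qed.

Lemma NB_one m r : NB m r ser_one 1.
Proof.
  split. apply supp_one. intros N. rewrite pn_only0. rewrite blk_one_0; lra.
  intros d Hd. apply blk_zero_words. intros w Hw. destruct w; simpl in Hw; [lia|reflexivity].
Qed.

Definition svar (i : nat) : ser := fun w => if list_eq_dec Nat.eq_dec w [i] then C1 else C0.

Lemma NB_var m r i : (i < m)%nat -> 0 <= r -> NB m r (svar i) r.
Proof.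
  intros Hi Hr.
  assert (H1 : blk m (svar i) 1 = 1).
  { unfold blk. rewrite rs_words_S, words_0, rs_cons, rs_nil, Rplus_0_r.
    assert (Hs : seq 0 m = seq 0 i ++ [i] ++ seq (S i) (m - S i)).
    { replace m with (i + S (m - S i))%nat at 1 by lia. rewrite seq_app. simpl. reflexivity. }
    rewrite Hs, !rs_app. rewrite (rs_zero _ (seq 0 i)), (rs_zero _ (seq (S i) _)). rewrite rs_cons, rs_nil. unfold svar.
    destruct (list_eq_dec Nat.eq_dec [i] [i]); [|congruence]. rewrite Cmod_C1; ring.
    intros x Hx. apply in_seq in Hx. unfold svar. destruct (list_eq_dec Nat.eq_dec [x] [i]). inversion e; lia. apply Cmod_C0.
    intros x Hx. apply in_seq in Hx. unfold svar. destruct (list_eq_dec Nat.eq_dec [x] [i]). inversion e; lia. apply Cmod_C0. }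
  assert (H0 : blk m (svar i) 0 = 0).
  { apply blk_zero_words. intros w Hw. destruct w; simpl in Hw; try lia. reflexivity. }
  assert (H2 : forall d, (d >= 2)%nat -> blk m (svar i) d = 0).
  { intros d Hd. apply blk_zero_words. intros w Hw. unfold svar.
    destruct (list_eq_dec Nat.eq_dec w [i]); auto. subst w. simpl in Hw. lia. }
  split.
  - intros w Hw. unfold svar. destruct (list_eq_dec Nat.eq_dec w [i]); auto. subst. exfalso; apply Hw. repeat constructor; auto.
  - assert (forall N, pn m r (svar i) (S N) = r).
    { induction N. rewrite pn_S. unfold pn, rs; simpl. rewrite H0, H1. ring.
      rewrite pn_S, IHN, (H2 (S (S N))) by lia. ring. }
    intros [|N]. unfold pn, rs; simpl. rewrite H0. lra. rewrite H. lra.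
Qed.

Lemma NB_mono m r q T M : 0 <= r -> (forall x, In x q -> NB m r (T x) M) -> NB m r (mono q T) (M ^ length q).
Proof.
  intros Hr. induction q; intros H. apply NB_one. rewrite mono_cons. simpl length. simpl pow.
  apply NB_mul; auto. apply H; simpl; auto. apply IHq. intros; apply H; simpl; auto.
Qed.

(* Fatou *)
Lemma NB_limit m r (P : nat -> ser) (Q : ser) B : 0 <= r ->
  (forall w, cvC (fun k => P k w) (Q w)) -> (forall k, NB m r (P k) B) -> NB m r Q B.
Proof.
  intros Hr Hcv HB. split.
  - intros w Hw. apply (cvC_unique (fun k => P k w)); auto.
    apply cvC_ev with 0%nat. intros k _. destruct (HB k) as [Hs _]. apply Hs; auto.
  - intros N. apply Un_cv_le with (fun k => pn m r (P k) N).
    + unfold pn. apply Un_cv_rs. intros d _. apply Un_cv_scal. unfold blk. apply Un_cv_rs.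
      intros w _. apply cvC_Cmod. auto.
    + intros k. apply HB.
Qed.

Lemma NB_small_zero m r P : 0 < r -> (forall eps, eps > 0 -> NB m r P eps) -> forall w, P w = C0.
Proof.
  intros Hr H w. destruct (Forall_dec (fun x => (x < m)%nat) (fun x => lt_dec x m) w) as [Hv|Hv].
  - apply Cmod_small_eq. intros eps He.
    assert (Hp : 0 < r ^ length w) by (apply pow_lt; auto).
    assert (Hpos : eps * r ^ length w / 2 > 0) by (apply Rdiv_lt_0_compat; [apply Rmult_lt_0_compat|]; lra).
    pose proof (coef_bound m r P (eps * r ^ length w / 2) w ltac:(lra) (H _ Hpos) Hv).
    assert (Cmod (P w) <= eps / 2).
    { apply Rmult_le_reg_l with (r ^ length w); auto. lra. }
    lra.
  - destruct (H 1 ltac:(lra)) as [Hs _]. apply Hs; auto.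
Qed.

Lemma coef_small m r P B w : 0 < r -> NB m r P B -> Cmod (P w) <= B / r ^ length w.
Proof.
  intros Hr HB. destruct (Forall_dec (fun x => (x < m)%nat) (fun x => lt_dec x m) w) as [Hv|Hv].
  - pose proof (coef_bound m r P B w ltac:(lra) HB Hv). assert (0 < r ^ length w) by (apply pow_lt; auto).
    apply Rmult_le_reg_l with (r ^ length w); auto. field_simplify; lra.
  - pose proof (NB_nonneg m r P B ltac:(lra) HB). destruct HB as [Hs _]. rewrite Hs, Cmod_C0 by auto. unfold Rdiv. apply Rmult_le_pos. auto. left; apply Rinv_0_lt_compat, pow_lt; auto.
Qed.

Lemma has_norm_NB m r P l : 0 <= r -> supported m P -> has_norm m r P l -> NB m r P l.
Proof.
  intros Hr Hs Hl. split; auto. intros N. unfold pn.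
  apply (infsum_partial_le (fun d => r ^ d * blk m P d)); auto.
  intros d. apply Rmult_le_pos. apply pow_le; auto. apply blk_nonneg.
Qed.

Lemma NB_has_norm m r P B : 0 <= r -> NB m r P B -> exists l, has_norm m r P l /\ l <= B.
Proof.
  intros Hr [Hs H]. apply (infsum_bounded (fun d => r ^ d * blk m P d)); auto.
  intros d. apply Rmult_le_pos. apply pow_le; auto. apply blk_nonneg.
Qed.

Definition csum {X} (f : X -> ser) (l : list X) : ser := fun w => cs (fun x => f x w) l.

Lemma NB_csum {X} p r (f : X -> ser) (b : X -> R) l : 0 <= r ->
  (forall x, In x l -> NB p r (f x) (b x)) -> NB p r (csum f l) (rs b l).
Proof.
  intros Hr. induction l; intros H.
  - replace (csum f []) with szero by (apply functional_extensionality; reflexivity).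
    rewrite rs_nil. apply NB_zero.
  - replace (csum f (a :: l)) with (sadd (f a) (csum f l)) by (apply functional_extensionality; reflexivity).
    rewrite rs_cons. apply NB_add; auto. apply H; simpl; auto. apply IHl; intros; apply H; simpl; auto.
Qed.

Definition eterm m (G : ser) (T : nat -> ser) d : ser := csum (fun q => sscal (G q) (mono q T)) (words m d).
Definition evp m (G : ser) (T : nat -> ser) D : ser := csum (fun d => eterm m G T d) (seq 0 (S D)).

Lemma eval_term_eq m G T w d : eval_term m G T w d = eterm m G T d w.
Proof. reflexivity. Qed.

Lemma eval_is_iff m G T V : eval_is m G T V <-> forall w, cvC (fun D => evp m G T D w) (V w).
Proof.
  unfold eval_is. split; intros H w; specialize (H w).
  - apply Cinf_cvC in H. exact H.
  - apply Cinf_cvC. exact H.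
Qed.

Lemma NB_eterm m p r G T M d : 0 <= r -> (forall x, (x < m)%nat -> NB p r (T x) M) ->
  NB p r (eterm m G T d) (blk m G d * M ^ d).
Proof.
  intros Hr HT. unfold eterm, blk. rewrite Rmult_comm, <- rs_scal.
  rewrite (rs_ext (fun x => M ^ d * Cmod (G x)) (fun x => Cmod (G x) * M ^ d)) by (intro; ring).
  apply NB_csum; auto. intros q Hq. apply In_words in Hq. destruct Hq as [Hl Hv].
  apply NB_scal; auto. rewrite <- Hl. apply NB_mono; auto. intros x Hx.
  apply HT. eapply Forall_forall in Hv; eauto.
Qed.

Lemma NB_eterm_range m p r G T M a k : 0 <= r -> (forall x, (x < m)%nat -> NB p r (T x) M) ->
  NB p r (csum (fun d => eterm m G T d) (seq a k)) (rs (fun d => blk m G d * M ^ d) (seq a k)).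
Proof. intros. apply NB_csum; auto. intros; apply NB_eterm; auto. Qed.

Lemma geom_tail rho a k : 0 <= rho < 1 -> rs (fun d => rho ^ d) (seq a k) <= rho ^ a / (1 - rho).
Proof.
  intros Hr. revert a; induction k; intros a.
  - simpl seq. rewrite rs_nil. apply Rmult_le_pos. apply pow_le; lra. left; apply Rinv_0_lt_compat; lra.
  - simpl seq. rewrite rs_cons. specialize (IHk (S a)). simpl pow in IHk.
    apply Rle_trans with (rho ^ a + rho * rho ^ a / (1 - rho)); [lra|].
    right. field. lra.
Qed.

Lemma pow_decr x a b : 0 <= x <= 1 -> (a <= b)%nat -> x ^ b <= x ^ a.
Proof.
  intros Hx H. induction H. lra. simpl. pose proof (pow_le x m (proj1 Hx)). nra.
Qed.

Lemma blk_geom m R G h d : 0 < R -> NB m R G h -> forall M, 0 <= M -> blk m G d * M ^ d <= h * (M / R) ^ d.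
Proof.
  intros HR HG M HM. pose proof (blk_bound m R G h d ltac:(lra) HG).
  assert (0 < R ^ d) by (apply pow_lt; auto).
  unfold Rdiv. rewrite Rpow_mult_distr, pow_inv.
  apply Rmult_le_reg_l with (R ^ d); auto.
  replace (R ^ d * (h * (M ^ d * / R ^ d))) with (h * M ^ d) by (field; lra).
  pose proof (pow_le M d HM). nra.
Qed.

Lemma evp_diff m G T D k : ssub (evp m G T (D + k)) (evp m G T D) = csum (fun d => eterm m G T d) (seq (S D) k).
Proof.
  apply functional_extensionality; intro w. unfold ssub, evp, csum.
  replace (S (D + k)) with (S D + k)%nat by lia. rewrite seq_app, cs_app. simpl (0 + S D)%nat. Cring.
Qed.

Lemma cvC_shift u l D : cvC u l -> cvC (fun k => u (D + k)%nat) l.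
Proof. intros H eps He. destruct (H eps He) as [N HN]. exists N. intros k Hk. apply HN. lia. Qed.

Lemma eval_exist m p G T R r h M :
  0 < r -> 0 <= M -> M < R -> NB m R G h -> (forall x, (x < m)%nat -> NB p r (T x) M) ->
  exists V, (forall w, cvC (fun D => evp m G T D w) (V w)) /\
            (forall D, NB p r (ssub V (evp m G T D)) (h * (M / R) ^ (S D) / (1 - M / R))).
Proof.
  intros Hr HM HMR HG HT.
  assert (HR : 0 < R) by lra.
  set (rho := M / R).
  assert (Hrho : 0 <= rho < 1).
  { unfold rho. split. apply Rmult_le_pos; auto. left; apply Rinv_0_lt_compat; auto.
    apply Rmult_lt_reg_r with R; auto. unfold Rdiv. rewrite Rmult_assoc, Rinv_l by lra. lra. }
  assert (Hh : 0 <= h) by (eapply NB_nonneg; [|exact HG]; lra).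
  assert (Hdiff : forall D k, NB p r (ssub (evp m G T (D + k)) (evp m G T D)) (h * rho ^ (S D) / (1 - rho))).
  { intros D k. rewrite evp_diff. eapply NB_weaken. apply NB_eterm_range; eauto; lra.
    eapply Rle_trans. apply rs_le. intro d. apply (blk_geom m R G h d HR HG M HM).
    rewrite rs_scal. fold rho. unfold Rdiv. rewrite Rmult_assoc. apply Rmult_le_compat_l; auto.
    apply geom_tail; auto. }
  assert (Hex : forall w, exists l, cvC (fun D => evp m G T D w) l).
  { intros w. apply cvC_cauchy. intros eps He.
    assert (Hpos : 0 < eps * (1 - rho) * r ^ length w / (h + 1)).
    { apply Rdiv_lt_0_compat; [|lra]. apply Rmult_lt_0_compat; [apply Rmult_lt_0_compat|]; try lra. apply pow_lt; auto. }
    destruct (pow_lt_1_zero rho ltac:(rewrite Rabs_pos_eq; lra) _ Hpos) as [N HN].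
    exists N. intros k k' Hk Hk'.
    assert (Hgen : forall a b, (N <= a)%nat -> (a <= b)%nat -> Cmod (Csub (evp m G T b w) (evp m G T a w)) < eps).
    { intros a b Ha Hab. replace b with (a + (b - a))%nat by lia.
      pose proof (coef_small p r _ _ w Hr (Hdiff a (b - a)%nat)). unfold ssub in H.
      eapply Rle_lt_trans; [exact H|].
      assert (Hrw : 0 < r ^ length w) by (apply pow_lt; auto).
      specialize (HN (S a) ltac:(lia)). rewrite Rabs_pos_eq in HN by (apply pow_le; lra).
      apply Rmult_lt_reg_r with (r ^ length w); auto. unfold Rdiv. rewrite Rmult_assoc, Rinv_l by lra.
      rewrite Rmult_1_r.
      apply Rle_lt_trans with (h * (eps * (1 - rho) * r ^ length w / (h + 1)) * / (1 - rho)).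
      { apply Rmult_le_compat_r. left; apply Rinv_0_lt_compat; lra. apply Rmult_le_compat_l; lra. }
      replace (h * (eps * (1 - rho) * r ^ length w / (h + 1)) * / (1 - rho)) with (eps * r ^ length w * (h / (h + 1))) by (field; lra).
      assert (h / (h+1) < 1) by (apply Rmult_lt_reg_r with (h+1); [lra|]; unfold Rdiv; rewrite Rmult_assoc, Rinv_l; lra).
      assert (0 < eps * r ^ length w) by (apply Rmult_lt_0_compat; lra). nra. }
    destruct (le_lt_dec k k').
    + rewrite Cmod_sub_sym. apply Hgen; lia.
    + apply Hgen; lia. }
  exists (fun w => proj1_sig (constructive_indefinite_description _ (Hex w))).
  assert (Hcv : forall w, cvC (fun D => evp m G T D w) (proj1_sig (constructive_indefinite_description _ (Hex w)))).
  { intros w. destruct (constructive_indefinite_description _ (Hex w)); auto. }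
  split; auto.
  intros D. apply NB_limit with (fun k => ssub (evp m G T (D + k)) (evp m G T D)); [lra| |auto].
  intros w. unfold ssub. apply cvC_sub. apply (cvC_shift (fun k => evp m G T k w)). apply Hcv. apply cvC_ev with 0%nat; auto.
Qed.

Lemma NB_evp m p r G T M D : 0 <= r -> (forall x, (x < m)%nat -> NB p r (T x) M) ->
  NB p r (evp m G T D) (rs (fun d => blk m G d * M ^ d) (seq 0 (S D))).
Proof. intros. apply NB_eterm_range; auto. Qed.

Lemma ssub_mul_decomp A B A' B' :
  ssub (ser_mul A B) (ser_mul A' B') = sadd (ser_mul A (ssub B B')) (ser_mul (ssub A A') B').
Proof.
  rewrite smul_sub_r, smul_sub_l. apply functional_extensionality; intro w.
  unfold ssub, sadd. Cring.
Qed.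

Lemma NB_mono_lip p r q T T' M (kb : nat -> R) : 0 <= r -> 0 <= M ->
  (forall x, In x q -> NB p r (T x) M /\ NB p r (T' x) M /\ NB p r (ssub (T x) (T' x)) (kb x)) ->
  NB p r (ssub (mono q T) (mono q T')) (rs kb q * M ^ (pred (length q))).
Proof.
  intros Hr HM. induction q as [|x q IH]; intros H.
  - replace (ssub (mono [] T) (mono [] T')) with szero.
    rewrite rs_nil, Rmult_0_l. apply NB_zero.
    apply functional_extensionality; intro w. unfold ssub, szero. rewrite Csub_diag; reflexivity.
  - rewrite !mono_cons, ssub_mul_decomp.
    destruct (H x (or_introl eq_refl)) as [H1 [H2 H3]].
    assert (IH' : NB p r (ssub (mono q T) (mono q T')) (rs kb q * M ^ pred (length q)))
      by (apply IH; intros; apply H; simpl; auto).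
    assert (Hm : NB p r (mono q T') (M ^ length q)) by (apply NB_mono; auto; intros; apply H; simpl; auto).
    eapply NB_weaken. apply NB_add; auto. apply NB_mul; eauto. apply NB_mul; eauto.
    rewrite rs_cons. simpl length. simpl pred. right.
    destruct q. simpl. rewrite rs_nil. ring. simpl length. simpl pred. simpl pow. ring.
Qed.

Lemma ssub_csum {X} (f g : X -> ser) l : ssub (csum f l) (csum g l) = csum (fun x => ssub (f x) (g x)) l.
Proof. apply functional_extensionality; intro w. unfold ssub, csum. rewrite cs_sub. reflexivity. Qed.
Lemma ssub_sscal c P Q : ssub (sscal c P) (sscal c Q) = sscal c (ssub P Q).
Proof. apply functional_extensionality; intro w. unfold ssub, sscal. Cring. Qed.

Lemma NB_eterm_lip m p r G T T' M kb d : 0 <= r -> 0 <= M ->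
  (forall x, (x < m)%nat -> NB p r (T x) M /\ NB p r (T' x) M /\ NB p r (ssub (T x) (T' x)) (kb x)) ->
  NB p r (ssub (eterm m G T d) (eterm m G T' d)) (rs (fun q => Cmod (G q) * (rs kb q * M ^ (pred d))) (words m d)).
Proof.
  intros Hr HM H. unfold eterm. rewrite ssub_csum. apply NB_csum; auto.
  intros q Hq. apply In_words in Hq. destruct Hq as [Hl Hv]. rewrite ssub_sscal. apply NB_scal; auto.
  rewrite <- Hl. apply NB_mono_lip; auto. intros x Hx. apply H. eapply Forall_forall in Hv; eauto.
Qed.

Lemma rs_seq_shift_map (f : nat -> R) a k : rs f (seq (S a) k) = rs (fun d => f (S d)) (seq a k).
Proof. rewrite seq_shift_S, rs_map. reflexivity. Qed.

Lemma sum_from2 (g : nat -> R) c s D : 0 <= c -> 0 <= s < 1 -> g 0%nat <= 0 -> g 1%nat <= 0 ->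
  (forall d, (d >= 2)%nat -> g d <= c * s ^ (pred d)) -> rs g (seq 0 (S D)) <= c * (s / (1 - s)).
Proof.
  intros Hc Hs H0 H1 Hd.
  assert (Hpos : 0 <= c * (s / (1 - s))).
  { apply Rmult_le_pos; auto. apply Rmult_le_pos; [lra|]. left; apply Rinv_0_lt_compat; lra. }
  destruct D. { unfold rs; simpl. lra. }
  simpl seq. rewrite !rs_cons.
  assert (rs g (seq 2 D) <= c * (s / (1 - s))).
  { eapply Rle_trans. apply rs_le_in. intros d Hd'. apply in_seq in Hd'. apply Hd. lia.
    rewrite rs_scal. apply Rmult_le_compat_l; auto.
    rewrite rs_seq_shift_map. simpl pred.
    eapply Rle_trans. apply geom_tail; auto. simpl. unfold Rdiv. rewrite Rmult_1_r. lra. }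
  lra.
Qed.

Lemma pow_2d (x : R) d : 0 <= x -> INR d * x ^ pred d <= (2 * x) ^ pred d.
Proof.
  intros Hx. destruct d. simpl. lra. simpl pred. rewrite Rpow_mult_distr.
  apply Rmult_le_compat_r. apply pow_le; auto.
  induction d. simpl INR. simpl pow. lra. rewrite S_INR. simpl pow.
  assert (1 <= 2 ^ d) by (apply pow_R1_Rle; lra). lra.
Qed.

Lemma rs_kb_bound q (kb : nat -> R) K : (forall x, In x q -> kb x <= K) -> rs kb q <= INR (length q) * K.
Proof.
  induction q; intros H. rewrite rs_nil; simpl; lra.
  rewrite rs_cons. simpl length. rewrite S_INR.
  assert (kb a <= K) by (apply H; simpl; auto). assert (rs kb q <= INR (length q) * K) by (apply IHq; intros; apply H; simpl; auto). lra.
Qed.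

Lemma words_1 m : words m 1 = map (fun i => [i]) (seq 0 m).
Proof. simpl. rewrite app_nil_r. reflexivity. Qed.

Lemma pair_tuple_lt n U V x : (x < n)%nat -> pair_tuple n U V x = U x.
Proof. intros. unfold pair_tuple. destruct (Nat.ltb_spec x n); auto; lia. Qed.
Lemma pair_tuple_ge n U V x : (x >= n)%nat -> pair_tuple n U V x = V (x - n)%nat.
Proof. intros. unfold pair_tuple. destruct (Nat.ltb_spec x n); auto; lia. Qed.

Lemma NB_evp_lip n r G R h B W W' a M K D :
  0 < r -> 0 <= a <= M -> 0 <= K -> 0 < R -> 2 * M / R < 1 -> NB (2 * n) R G h -> G [] = C0 ->
  (forall j, (j < n)%nat -> G [(n + j)%nat] = C0) ->
  (forall i, (i < n)%nat -> NB n r (B i) a) ->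
  (forall j, (j < n)%nat -> NB n r (W j) M /\ NB n r (W' j) M /\ NB n r (ssub (W j) (W' j)) K) ->
  NB n r (ssub (evp (2 * n) G (pair_tuple n B W) D) (evp (2 * n) G (pair_tuple n B W') D))
     (h * K / R * ((2 * M / R) / (1 - 2 * M / R))).
Proof.
  intros Hr Ha HK HR Hs HG H0 H1 HB HW.
  assert (Hh : 0 <= h) by (eapply NB_nonneg; [|exact HG]; lra).
  set (kb := fun x => if Nat.ltb x n then 0 else K).
  assert (HT : forall x, (x < 2 * n)%nat -> NB n r (pair_tuple n B W x) M /\ NB n r (pair_tuple n B W' x) M /\
              NB n r (ssub (pair_tuple n B W x) (pair_tuple n B W' x)) (kb x)).
  { intros x Hx. unfold kb. destruct (Nat.ltb_spec x n).
    - rewrite !pair_tuple_lt by auto. split; [|split]; try (eapply NB_weaken; [apply HB; auto|lra]).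
      replace (ssub (B x) (B x)) with szero. apply NB_zero.
      apply functional_extensionality; intro w; unfold ssub, szero; rewrite Csub_diag; auto.
    - rewrite !pair_tuple_ge by auto. apply HW. lia. }
  unfold evp. rewrite ssub_csum. eapply NB_weaken. apply NB_csum; [lra|].
  intros d _. apply (NB_eterm_lip (2 * n) n r G _ _ M kb d); [lra|lra|exact HT].
  apply sum_from2.
  - apply Rmult_le_pos; [|left; apply Rinv_0_lt_compat; auto]. apply Rmult_le_pos; auto.
  - split; [|auto]. apply Rmult_le_pos; [lra|left; apply Rinv_0_lt_compat; auto].
  - rewrite words_0, rs_cons, !rs_nil, H0, Cmod_C0, Rmult_0_l. lra.
  - rewrite words_1, rs_map. right. apply rs_zero. intros x Hx. apply in_seq in Hx.
    unfold kb. rewrite rs_cons, rs_nil. destruct (Nat.ltb_spec x n). ring.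
    replace x with (n + (x - n))%nat by lia. rewrite H1 by lia. rewrite Cmod_C0. ring.
  - intros d Hd. 
    apply Rle_trans with (rs (fun q => Cmod (G q) * (K * (2 * M) ^ pred d)) (words (2 * n) d)).
    + apply rs_le_in. intros q Hq. apply Rmult_le_compat_l. apply Cmod_ge0.
      apply In_words in Hq. destruct Hq as [Hl _].
      eapply Rle_trans. apply Rmult_le_compat_r. apply pow_le; lra.
      apply (rs_kb_bound q kb K). intros; unfold kb; destruct (Nat.ltb x n); lra.
      rewrite Hl. pose proof (pow_2d M d ltac:(lra)). nra.
    + rewrite (rs_ext _ (fun q => (K * (2 * M) ^ pred d) * Cmod (G q))) by (intro; ring). rewrite rs_scal.
      fold (blk (2 * n) G d). pose proof (blk_bound _ R G h d ltac:(lra) HG) as Hb.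
      destruct d as [|e]; [lia|]. simpl pred. simpl pow in Hb.
      assert (HRe : 0 < R ^ e) by (apply pow_lt; auto).
      assert (HRR : 0 < R * R ^ e) by (apply Rmult_lt_0_compat; auto).
      assert (Hb' : blk (2 * n) G (S e) <= h / (R * R ^ e)).
      { apply Rmult_le_reg_l with (R * R ^ e); auto.
        replace (R * R ^ e * (h / (R * R ^ e))) with h by (field; lra). lra. }
      assert (HX : 0 <= K * (2 * M) ^ e) by (apply Rmult_le_pos; auto; apply pow_le; lra).
      apply Rle_trans with (K * (2 * M) ^ e * (h / (R * R ^ e))). apply Rmult_le_compat_l; auto.
      right. replace ((2 * M / R) ^ e) with ((2 * M) ^ e / R ^ e) by (unfold Rdiv; rewrite (Rpow_mult_distr (2 * M) (/ R)), pow_inv; reflexivity).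
      field. split; lra.
Qed.

Lemma NB_evp_self n r G R h B W a M D :
  0 < r -> 0 <= a <= M -> 0 < R -> M / R < 1 -> NB (2 * n) R G h -> G [] = C0 ->
  (forall j, (j < n)%nat -> G [(n + j)%nat] = C0) ->
  (forall i, (i < n)%nat -> NB n r (B i) a) ->
  (forall j, (j < n)%nat -> NB n r (W j) M) ->
  NB n r (evp (2 * n) G (pair_tuple n B W) D) (h / R * a + h * ((M / R) ^ 2 / (1 - M / R))).
Proof.
  intros Hr Ha HR Hs HG H0 H1 HB HW.
  assert (Hh : 0 <= h) by (eapply NB_nonneg; [|exact HG]; lra).
  assert (HT : forall x, (x < 2 * n)%nat -> NB n r (pair_tuple n B W x) M).
  { intros x Hx. destruct (Nat.ltb_spec x n).
    - rewrite pair_tuple_lt by auto. eapply NB_weaken; [apply HB; auto|lra].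
    - rewrite pair_tuple_ge by auto. apply HW. lia. }
  assert (HMR : 0 <= M / R) by (apply Rmult_le_pos; [lra|left; apply Rinv_0_lt_compat; auto]).
  set (b := fun d => if Nat.eqb d 0 then 0 else if Nat.eqb d 1 then h / R * a else h * (M / R) ^ d).
  unfold evp. eapply NB_weaken. apply (NB_csum _ _ _ b); [lra|].
  - intros d _. unfold b. destruct (Nat.eqb_spec d 0); [|destruct (Nat.eqb_spec d 1)].
    + subst. eapply NB_weaken. apply NB_eterm; [lra|exact HT]. unfold blk.
      rewrite words_0, rs_cons, !rs_nil, H0, Cmod_C0. simpl; lra.
    + subst. unfold eterm. eapply NB_weaken. apply (NB_csum _ _ _ (fun q => Cmod (G q) * a)); [lra|].
      * intros q Hq. rewrite words_1 in Hq. apply in_map_iff in Hq. destruct Hq as [x [<- Hx]]. apply in_seq in Hx.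
        destruct (Nat.ltb_spec x n).
        -- eapply NB_weaken. apply NB_scal; [lra|]. apply (NB_mono n r [x] _ a); [lra|].
           intros y [<-|[]]. rewrite pair_tuple_lt by auto. auto. simpl. right; ring.
        -- replace x with (n + (x - n))%nat by lia. rewrite H1 by lia. rewrite Cmod_C0, Rmult_0_l.
           replace 0 with (Cmod C0 * M ^ length [(n + (x - n))%nat]) by (rewrite Cmod_C0; ring).
           apply NB_scal; [lra|]. apply NB_mono; [lra|]. intros y [<-|[]]. apply HT. lia.
      * rewrite (rs_ext _ (fun q => a * Cmod (G q))) by (intro; ring). rewrite rs_scal. fold (blk (2 * n) G 1).
        pose proof (blk_bound _ R G h 1 ltac:(lra) HG). simpl pow in H.
        assert (blk (2 * n) G 1 <= h / R).
        { apply Rmult_le_reg_l with R; auto. replace (R * (h / R)) with h by (field; lra). lra. }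
        rewrite Rmult_comm. apply Rmult_le_compat_r; lra.
    + eapply NB_weaken. apply NB_eterm; [lra|exact HT]. apply blk_geom; auto; lra.
  - destruct D.
    + unfold b, rs; simpl. assert (0 <= h * ((M / R) ^ 2 / (1 - M / R))).
      { apply Rmult_le_pos; auto. apply Rmult_le_pos; [apply pow_le; auto|left; apply Rinv_0_lt_compat; lra]. }
      assert (0 <= h / R * a) by (apply Rmult_le_pos; [apply Rmult_le_pos; [lra|left; apply Rinv_0_lt_compat; auto]|lra]).
      lra.
    + simpl seq. rewrite !rs_cons. unfold b at 1 2. simpl.
      assert (rs b (seq 2 D) <= h * ((M / R) ^ 2 / (1 - M / R))).
      { rewrite (rs_ext_in _ (fun d => h * (M / R) ^ d)). rewrite rs_scal. apply Rmult_le_compat_l; auto.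
        apply geom_tail; lra. intros d Hd. apply in_seq in Hd. unfold b.
        destruct (Nat.eqb_spec d 0); [lia|]. destruct (Nat.eqb_spec d 1); [lia|]. reflexivity. }
      lra.
Qed.

Definition limC (u : nat -> C) : C :=
  match excluded_middle_informative (exists l, cvC u l) with
  | left H => proj1_sig (constructive_indefinite_description _ H)
  | right _ => C0 end.

Lemma limC_spec u : (exists l, cvC u l) -> cvC u (limC u).
Proof.
  intros H. unfold limC. destruct (excluded_middle_informative _); [|contradiction].
  destruct (constructive_indefinite_description _ e). auto.
Qed.
Lemma limC_eq u l : cvC u l -> limC u = l.
Proof. intros H. eapply cvC_unique; [apply limC_spec; eauto|exact H]. Qed.

Definition evalf m (G : ser) (T : nat -> ser) : ser := fun w => limC (fun D => evp m G T D w).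

Lemma evalf_spec m p G T R r h M :
  0 < r -> 0 <= M -> M < R -> NB m R G h -> (forall x, (x < m)%nat -> NB p r (T x) M) ->
  forall w, cvC (fun D => evp m G T D w) (evalf m G T w).
Proof.
  intros. destruct (eval_exist m p G T R r h M) as [V [HV _]]; auto.
  apply limC_spec. eauto.
Qed.

Lemma ssub_self P : ssub P P = szero.
Proof. apply functional_extensionality; intro w; unfold ssub, szero; apply Csub_diag. Qed.
Lemma ssub_szero P : ssub P szero = P.
Proof. apply functional_extensionality; intro w; unfold ssub, szero. Cring. Qed.
Lemma Cmod_sub_sym_ser P Q : ssub P Q = sscal (mkC (-1) 0) (ssub Q P).
Proof. apply functional_extensionality; intro w; unfold ssub, sscal. Cring. Qed.
Lemma NB_ssub_sym p r P Q B : 0 <= r -> NB p r (ssub P Q) B -> NB p r (ssub Q P) B.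
Proof.
  intros Hr H. rewrite Cmod_sub_sym_ser. eapply NB_weaken. apply NB_scal; eauto.
  unfold Cmod; simpl. replace (-1 * -1 + 0 * 0) with 1 by ring. rewrite sqrt_1. lra.
Qed.
Lemma ssub_tele P Q S : ssub P S = sadd (ssub P Q) (ssub Q S).
Proof. apply functional_extensionality; intro w; unfold ssub, sadd. Cring. Qed.

Lemma NB_sub_limit p r (u v : nat -> ser) U V B : 0 <= r ->
  (forall w, cvC (fun D => u D w) (U w)) -> (forall w, cvC (fun D => v D w) (V w)) ->
  (forall D, NB p r (ssub (u D) (v D)) B) -> NB p r (ssub U V) B.
Proof.
  intros Hr Hu Hv HB. apply NB_limit with (fun D => ssub (u D) (v D)); auto.
  intros w. unfold ssub. apply cvC_sub; auto.
Qed.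


Lemma cauchy_ser p r (u : nat -> ser) c q : 0 < r -> 0 <= c -> 0 <= q < 1 ->
  (forall k t, NB p r (ssub (u (k + t)%nat) (u k)) (c * q ^ k)) -> forall w, exists l, cvC (fun k => u k w) l.
Proof.
  intros Hr Hc Hq H w. apply cvC_cauchy. intros eps He.
  assert (Hpos : 0 < eps * r ^ length w / (c + 1)).
  { apply Rdiv_lt_0_compat; [|lra]. apply Rmult_lt_0_compat; try lra. apply pow_lt; auto. }
  destruct (pow_lt_1_zero q ltac:(rewrite Rabs_pos_eq; lra) _ Hpos) as [N HN].
  exists N.
  assert (Hgen : forall k t, (N <= k)%nat -> Cmod (Csub (u (k + t)%nat w) (u k w)) < eps).
  { intros k t Hk. pose proof (coef_small p r _ _ w Hr (H k t)) as Hc'. unfold ssub in Hc'.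
    eapply Rle_lt_trans; [exact Hc'|].
    assert (Hrw : 0 < r ^ length w) by (apply pow_lt; auto).
    specialize (HN k Hk). rewrite Rabs_pos_eq in HN by (apply pow_le; lra).
    apply Rmult_lt_reg_r with (r ^ length w); auto. unfold Rdiv. rewrite Rmult_assoc, Rinv_l by lra.
    rewrite Rmult_1_r.
    apply Rle_lt_trans with (c * (eps * r ^ length w / (c + 1))).
    { apply Rmult_le_compat_l; lra. }
    replace (c * (eps * r ^ length w / (c + 1))) with (eps * r ^ length w * (c / (c + 1))) by (field; lra).
    assert (c / (c+1) < 1) by (apply Rmult_lt_reg_r with (c+1); [lra|]; unfold Rdiv; rewrite Rmult_assoc, Rinv_l; lra).
    assert (0 < eps * r ^ length w) by (apply Rmult_lt_0_compat; lra). nra. }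
  intros k k' Hk Hk'. destruct (le_lt_dec k k').
  - rewrite Cmod_sub_sym. replace k' with (k + (k' - k))%nat by lia. apply Hgen; lia.
  - replace k with (k' + (k - k'))%nat by lia. apply Hgen; lia.
Qed.

Lemma tail_limit p r (u : nat -> ser) (U : ser) c q : 0 < r ->
  (forall w, cvC (fun k => u k w) (U w)) ->
  (forall k t, NB p r (ssub (u (k + t)%nat) (u k)) (c * q ^ k)) -> forall k, NB p r (ssub U (u k)) (c * q ^ k).
Proof.
  intros Hr Hcv H k. apply NB_limit with (fun t => ssub (u (k + t)%nat) (u k)); [lra| |auto].
  intros w. unfold ssub. apply cvC_sub. apply (cvC_shift (fun t => u t w)). apply Hcv. apply cvC_ev with 0%nat; auto.
Qed.

Lemma small_geo_zero p r P c q : 0 < r -> 0 <= c -> 0 <= q < 1 -> (forall k, NB p r P (c * q ^ k)) -> forall w, P w = C0.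
Proof.
  intros Hr Hc Hq H. apply (NB_small_zero p r); auto. intros eps He.
  destruct (pow_lt_1_zero q ltac:(rewrite Rabs_pos_eq; lra) (eps / (c + 1))) as [N HN].
  { apply Rdiv_lt_0_compat; lra. }
  specialize (HN N (le_n _)). rewrite Rabs_pos_eq in HN by (apply pow_le; lra).
  eapply NB_weaken; [apply (H N)|].
  apply Rle_trans with (c * (eps / (c + 1))). apply Rmult_le_compat_l; lra.
  replace (c * (eps / (c + 1))) with (eps * (c / (c + 1))) by (field; lra).
  assert (c / (c+1) <= 1) by (apply Rmult_le_reg_r with (c+1); [lra|]; unfold Rdiv; rewrite Rmult_assoc, Rinv_l; lra).
  nra.
Qed.

Section Contraction.
Variables (n : nat) (r R h a M rho : R) (H : nat -> ser) (B : nat -> ser).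
Hypotheses (Hr : 0 < r) (HR : 0 < R) (Ha : 0 <= a) (HaM : a <= M) (HrhoM : 0 <= rho <= M)
  (Hs : 2 * M / R < 1)
  (HG : forall j, (j < n)%nat -> NB (2 * n) R (H j) h)
  (H0 : forall j, (j < n)%nat -> H j [] = C0)
  (H1 : forall j k, (j < n)%nat -> (k < n)%nat -> H j [(n + k)%nat] = C0)
  (HB : forall i, (i < n)%nat -> NB n r (B i) a).

Definition Lc := h / R * ((2 * M / R) / (1 - 2 * M / R)).

Lemma HMR : 0 <= M / R.
Proof. apply Rmult_le_pos; [lra|left; apply Rinv_0_lt_compat; auto]. Qed.
Lemma HMR1 : M / R < 1.
Proof. assert (E : 2 * M / R = 2 * (M / R)) by (unfold Rdiv; ring). pose proof HMR. lra. Qed.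
Lemma HMlt : M < R.
Proof. pose proof HMR1 as E. apply Rmult_lt_reg_r with (/ R). apply Rinv_0_lt_compat; auto.
  rewrite Rinv_r by lra. exact E. Qed.

Lemma Tbound (W : nat -> ser) : (forall j, (j < n)%nat -> NB n r (W j) M) ->
  forall x, (x < 2 * n)%nat -> NB n r (pair_tuple n B W x) M.
Proof.
  intros HW x Hx. destruct (Nat.ltb_spec x n).
  - rewrite pair_tuple_lt by auto. eapply NB_weaken; [apply HB; auto|lra].
  - rewrite pair_tuple_ge by auto. apply HW. lia.
Qed.

Lemma eval_lip (W W' V V' : nat -> ser) K j : (j < n)%nat -> 0 <= K ->
  (forall k, (k < n)%nat -> NB n r (W k) M /\ NB n r (W' k) M /\ NB n r (ssub (W k) (W' k)) K) ->
  (forall w, cvC (fun D => evp (2 * n) (H j) (pair_tuple n B W) D w) (V j w)) ->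
  (forall w, cvC (fun D => evp (2 * n) (H j) (pair_tuple n B W') D w) (V' j w)) ->
  NB n r (ssub (V j) (V' j)) (K * Lc).
Proof.
  intros Hj HK HW Hv Hv'. eapply NB_sub_limit; [lra|exact Hv|exact Hv'|].
  intros D. eapply NB_weaken. apply (NB_evp_lip n r (H j) R h B W W' a M K D); auto.
  unfold Lc. right. unfold Rdiv. ring.
Qed.

Hypotheses (Hh : 0 <= h) (HL : Lc <= 1 / 2)
  (Hself : h / R * a + h * ((M / R) ^ 2 / (1 - M / R)) <= rho).

Lemma HLpos : 0 <= Lc.
Proof.
  unfold Lc. apply Rmult_le_pos. apply Rmult_le_pos; auto. left; apply Rinv_0_lt_compat; auto.
  apply Rmult_le_pos. apply Rmult_le_pos. lra. left; apply Rinv_0_lt_compat; auto.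
  left; apply Rinv_0_lt_compat; lra.
Qed.

Lemma eval_self (W : nat -> ser) (V : ser) j : (j < n)%nat ->
  (forall k, (k < n)%nat -> NB n r (W k) M) ->
  (forall w, cvC (fun D => evp (2 * n) (H j) (pair_tuple n B W) D w) (V w)) ->
  NB n r V rho.
Proof.
  intros Hj HW Hv. apply NB_limit with (fun D => evp (2 * n) (H j) (pair_tuple n B W) D); [lra|auto|].
  intros D. eapply NB_weaken; [|exact Hself]. apply NB_evp_self; auto; try lra.
  all: try apply HMR1; try (intros; apply H1; auto).
Qed.

Fixpoint pic (k : nat) : nat -> ser :=
  match k with O => fun _ => szero | S k' => fun j => evalf (2 * n) (H j) (pair_tuple n B (pic k')) end.

Lemma pic_conv k : (forall i, (i < n)%nat -> NB n r (pic k i) rho) -> forall j, (j < n)%nat ->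
  forall w, cvC (fun D => evp (2 * n) (H j) (pair_tuple n B (pic k)) D w) (pic (S k) j w).
Proof.
  intros HW j Hj w. simpl. apply (evalf_spec (2 * n) n _ _ R r h M); auto; try lra. apply HMlt.
  apply Tbound. intros; eapply NB_weaken; [apply HW; auto|lra].
Qed.

Lemma pic_ball_aux k : forall j, (j < n)%nat -> NB n r (pic k j) rho.
Proof.
  induction k; intros j Hj.
  - simpl. eapply NB_weaken; [apply NB_zero|lra].
  - apply (eval_self (pic k) _ j Hj). intros; eapply NB_weaken; [apply IHk; auto|lra].
    apply pic_conv; auto.
Qed.

Lemma pic_ball k : forall j, (j < n)%nat -> NB n r (pic k j) rho /\
  (forall w, cvC (fun D => evp (2 * n) (H j) (pair_tuple n B (pic k)) D w) (pic (S k) j w)).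
Proof.
  intros j Hj. split. apply pic_ball_aux; auto. apply pic_conv; auto. apply pic_ball_aux.
Qed.

Lemma pic_step k : forall j, (j < n)%nat -> NB n r (ssub (pic (S k) j) (pic k j)) (2 * rho * Lc ^ k).
Proof.
  induction k; intros j Hj.
  - simpl pic at 2. rewrite ssub_szero. eapply NB_weaken. apply pic_ball; auto. simpl; lra.
  - replace (2 * rho * Lc ^ S k) with ((2 * rho * Lc ^ k) * Lc) by (simpl; ring).
    apply (eval_lip (pic (S k)) (pic k) (pic (S (S k))) (pic (S k))); auto.
    + apply Rmult_le_pos. lra. apply pow_le, HLpos.
    + intros i Hi. split; [|split]. eapply NB_weaken; [apply pic_ball; auto|lra].
      eapply NB_weaken; [apply pic_ball; auto|lra]. apply IHk; auto.
    + apply pic_ball; auto.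
    + apply pic_ball; auto.
Qed.

Lemma pic_tele k t : forall j, (j < n)%nat -> NB n r (ssub (pic (k + t) j) (pic k j)) ((4 * rho) * Lc ^ k).
Proof.
  intros j Hj. eapply NB_weaken.
  - instantiate (1 := rs (fun i => 2 * rho * Lc ^ i) (seq k t)).
    induction t.
    + rewrite Nat.add_0_r, ssub_self. simpl seq. rewrite rs_nil. apply NB_zero.
    + rewrite (ssub_tele _ (pic (k + t) j)). rewrite seq_S, rs_app. rewrite Rplus_comm.
      apply NB_add; [lra| |auto]. rewrite rs_cons, rs_nil, Rplus_0_r. replace (k + S t)%nat with (S (k + t)) by lia.
      apply pic_step; auto.
  - rewrite rs_scal. pose proof HLpos.
    apply Rle_trans with (2 * rho * (Lc ^ k / (1 - Lc))).
    apply Rmult_le_compat_l; [lra|]. apply geom_tail; lra.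
    assert (Lc ^ k / (1 - Lc) <= 2 * Lc ^ k).
    { apply Rmult_le_reg_r with (1 - Lc); [lra|]. unfold Rdiv. rewrite Rmult_assoc, Rinv_l by lra.
      pose proof (pow_le Lc k H2). nra. }
    nra.
Qed.

Lemma picard_fix : exists f : nat -> ser, (forall j, (j < n)%nat -> NB n r (f j) rho) /\
  (forall j, (j < n)%nat -> forall w, cvC (fun D => evp (2 * n) (H j) (pair_tuple n B f) D w) (f j w)).
Proof.
  pose proof HLpos as HLp.
  assert (Hcv : forall j w, (j < n)%nat -> cvC (fun k => pic k j w) (limC (fun k => pic k j w))).
  { intros j w Hj. apply limC_spec. apply (cauchy_ser n r (fun k => pic k j) (4 * rho) Lc); auto; try lra.
    intros; apply pic_tele; auto. }
  set (f := fun j w => limC (fun k => pic k j w)).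
  assert (Hf : forall j, (j < n)%nat -> NB n r (f j) rho).
  { intros j Hj. apply NB_limit with (fun k => pic k j); [lra| |]. intros w; apply Hcv; auto.
    intros; apply pic_ball; auto. }
  assert (Htail : forall j k, (j < n)%nat -> NB n r (ssub (f j) (pic k j)) (4 * rho * Lc ^ k)).
  { intros j k Hj. apply (tail_limit n r (fun k => pic k j) (f j)); [exact Hr | intros w; apply Hcv; auto | intros; apply pic_tele; auto]. }
  exists f. split; auto.
  intros j Hj w.
  assert (HfM : forall i, (i < n)%nat -> NB n r (f i) M) by (intros; eapply NB_weaken; [apply Hf; auto|lra]).
  pose proof (evalf_spec (2 * n) n (H j) (pair_tuple n B f) R r h M Hr ltac:(lra) HMlt (HG j Hj) (Tbound f HfM)) as HE.
  set (E := evalf (2 * n) (H j) (pair_tuple n B f)) in *.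
  assert (HEf : forall w, E w = f j w).
  { intros w'. 
    assert (Z : forall w, ssub E (f j) w = C0).
    { apply (small_geo_zero n r _ (8 * rho) Lc); auto; try lra.
      intros k. rewrite (ssub_tele _ (pic (S k) j)).
      replace (8 * rho * Lc ^ k) with ((4 * rho * Lc ^ k) * Lc + (4 * rho * Lc ^ k) * (1 + 1 - Lc)) by ring.
      apply NB_add; [lra| |].
      - apply (eval_lip f (pic k) (fun _ => E) (pic (S k))); auto.
        + apply Rmult_le_pos. lra. apply pow_le; lra.
        + intros i Hi. split; [|split]; auto. eapply NB_weaken; [apply pic_ball; auto|lra].
        + apply pic_ball; auto.
      - apply NB_ssub_sym; [lra|]. eapply NB_weaken. apply Htail; auto.
        simpl. assert (0 <= 4 * rho * Lc ^ k) by (apply Rmult_le_pos; [lra|apply pow_le; lra]). nra. }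
    specialize (Z w'). unfold ssub in Z. replace (E w') with (Cadd (Csub (E w') (f j w')) (f j w')) by Cring.
    rewrite Z. apply Cadd_0_l. }
  eapply cvC_ext; [intros; reflexivity|]. rewrite <- HEf. apply HE.
Qed.

Lemma fix_unique (W W' : nat -> ser) :
  (forall j, (j < n)%nat -> NB n r (W j) M /\ NB n r (W' j) M) ->
  (forall j, (j < n)%nat -> forall w, cvC (fun D => evp (2 * n) (H j) (pair_tuple n B W) D w) (W j w)) ->
  (forall j, (j < n)%nat -> forall w, cvC (fun D => evp (2 * n) (H j) (pair_tuple n B W') D w) (W' j w)) ->
  forall j w, (j < n)%nat -> W j w = W' j w.
Proof.
  intros HW Hf Hf' j w Hj. pose proof HLpos.
  assert (Hk : forall k i, (i < n)%nat -> NB n r (ssub (W i) (W' i)) (2 * M * Lc ^ k)).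
  { induction k; intros i Hi.
    - simpl. eapply NB_weaken. apply NB_sub; [lra|apply HW|apply HW]; auto. lra.
    - replace (2 * M * Lc ^ S k) with (2 * M * Lc ^ k * Lc) by (simpl; ring).
      apply (eval_lip W W' W W'); auto.
      apply Rmult_le_pos; [lra|apply pow_le; lra].
      intros; split; [|split]; try apply HW; auto. }
  assert (Z := small_geo_zero n r _ (2 * M) Lc Hr ltac:(lra) ltac:(lra) (fun k => Hk k j Hj) w).
  unfold ssub in Z. replace (W j w) with (Cadd (Csub (W j w) (W' j w)) (W' j w)) by Cring. rewrite Z. apply Cadd_0_l.
Qed.

End Contraction.

Lemma NB_rad m r r' P B : 0 <= r' <= r -> NB m r P B -> NB m r' P B.
Proof.
  intros Hr [Hs H]. split; auto. intros N. eapply Rle_trans; [|apply (H N)].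
  unfold pn. apply rs_le; intro d. apply Rmult_le_compat_r. apply blk_nonneg.
  apply pow_incr; lra.
Qed.

Lemma evp_w m G T D w : evp m G T D w = cs (fun d => cs (fun q => Cmul (G q) (mono q T w)) (words m d)) (seq 0 (S D)).
Proof. reflexivity. Qed.

Lemma evp_sub m P Q T D : evp m (ssub P Q) T D = ssub (evp m P T D) (evp m Q T D).
Proof.
  apply functional_extensionality; intro w. unfold ssub at 2. rewrite !evp_w. rewrite <- cs_sub.
  apply cs_ext; intro d. rewrite <- cs_sub. apply cs_ext; intro q. unfold ssub. Cring.
Qed.
Lemma evp_add m P Q T D : evp m (sadd P Q) T D = sadd (evp m P T D) (evp m Q T D).
Proof.
  apply functional_extensionality; intro w. unfold sadd at 2. rewrite !evp_w. rewrite <- cs_plus.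
  apply cs_ext; intro d. rewrite <- cs_plus. apply cs_ext; intro q. unfold sadd. Cring.
Qed.
Lemma evp_scal m c P T D : evp m (sscal c P) T D = sscal c (evp m P T D).
Proof.
  apply functional_extensionality; intro w. unfold sscal at 2. rewrite !evp_w. rewrite <- cs_scal_l.
  apply cs_ext; intro d. rewrite <- cs_scal_l. apply cs_ext; intro q. unfold sscal. Cring.
Qed.

Lemma evp_ext_T m G T T' D : (forall x, (x < m)%nat -> T x = T' x) -> evp m G T D = evp m G T' D.
Proof.
  intros H. apply functional_extensionality; intro w. rewrite !evp_w. apply cs_ext; intro d.
  apply cs_ext_in; intros q Hq. apply In_words in Hq. destruct Hq as [_ Hv].
  assert (E : map T q = map T' q); [|unfold mono; rewrite E; reflexivity]. apply map_ext_in. intros x Hx. apply H. eapply Forall_forall in Hv; eauto.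
Qed.

Lemma evp_stable m G T K D : (forall q, (K < length q)%nat -> G q = C0) -> (K <= D)%nat -> evp m G T D = evp m G T K.
Proof.
  intros HG HD. apply functional_extensionality; intro w. rewrite !evp_w.
  replace (S D) with (S K + (D - K))%nat by lia. rewrite seq_app, cs_app.
  rewrite (cs_zero _ (seq (0 + S K) (D - K))). apply Cadd_0_r.
  intros d Hd. apply in_seq in Hd. apply cs_zero. intros q Hq. apply In_words in Hq.
  rewrite HG by lia. apply Cmul_0_l.
Qed.

Definition tr K (P : ser) : ser := fun w => if Nat.leb (length w) K then P w else C0.

Lemma tr_zero K P q : (K < length q)%nat -> tr K P q = C0.
Proof. intros. unfold tr. destruct (Nat.leb_spec (length q) K); auto; lia. Qed.
Lemma tr_eq K P q : (length q <= K)%nat -> tr K P q = P q.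
Proof. intros. unfold tr. destruct (Nat.leb_spec (length q) K); auto; lia. Qed.

Lemma evp_tr m P T K : evp m (tr K P) T K = evp m P T K.
Proof.
  apply functional_extensionality; intro w. rewrite !evp_w. apply cs_ext_in; intros d Hd. apply in_seq in Hd.
  apply cs_ext_in; intros q Hq. apply In_words in Hq. rewrite tr_eq by lia. reflexivity.
Qed.

Lemma blk_tr_le m P K d : blk m (tr K P) d <= blk m P d.
Proof.
  unfold blk. apply rs_le; intro q. unfold tr. destruct (Nat.leb (length q) K). lra. rewrite Cmod_C0; apply Cmod_ge0.
Qed.
Lemma NB_tr m r P K B : 0 <= r -> NB m r P B -> NB m r (tr K P) B.
Proof.
  intros Hr [Hs H]. split.
  - intros w Hw. unfold tr. destruct (Nat.leb _ _); auto.
  - intros N. eapply Rle_trans; [|apply (H N)]. unfold pn. apply rs_le; intro d.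
    apply Rmult_le_compat_l. apply pow_le; auto. apply blk_tr_le.
Qed.

Lemma NB_tr_tail m r s P K B : 0 < r -> 0 <= s < r -> NB m r P B ->
  NB m s (ssub P (tr K P)) (B * (s / r) ^ (S K) / (1 - s / r)).
Proof.
  intros Hr Hs HP.
  assert (Hrho : 0 <= s / r < 1).
  { split. apply Rmult_le_pos; [lra|left; apply Rinv_0_lt_compat; auto].
    apply Rmult_lt_reg_r with r; auto. unfold Rdiv. rewrite Rmult_assoc, Rinv_l by lra. lra. }
  assert (HB : 0 <= B) by (eapply NB_nonneg; [|exact HP]; lra).
  destruct HP as [Hsp H]. split.
  - apply supp_sub; auto. intros w Hw. unfold tr. destruct (Nat.leb _ _); auto.
  - intros N. unfold pn.
    assert (Hblk : forall d, blk m (ssub P (tr K P)) d = if Nat.leb d K then 0 else blk m P d).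
    { intros d. unfold blk. destruct (Nat.leb_spec d K).
      - apply rs_zero. intros q Hq. apply In_words in Hq. unfold ssub. rewrite tr_eq by lia. rewrite Csub_diag. apply Cmod_C0.
      - apply rs_ext_in. intros q Hq. apply In_words in Hq. unfold ssub. rewrite tr_zero by lia.
        f_equal. Cring. }
    assert (Hd : forall d, s ^ d * blk m (ssub P (tr K P)) d <= if Nat.leb d K then 0 else B * (s / r) ^ d).
    { intros d. rewrite Hblk. destruct (Nat.leb d K). lra.
      pose proof (blk_geom m r P B d Hr (conj Hsp H) s ltac:(lra)). lra. }
    eapply Rle_trans. apply rs_le; intro d; apply Hd.
    destruct (le_lt_dec N K).
    + rewrite rs_zero. apply Rmult_le_pos. apply Rmult_le_pos; auto. apply pow_le; lra.
      left; apply Rinv_0_lt_compat; lra.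
      intros d Hd'. apply in_seq in Hd'. destruct (Nat.leb_spec d K); auto; lia.
    + replace (S N) with (S K + (N - K))%nat by lia. rewrite seq_app, rs_app.
      rewrite rs_zero. rewrite Rplus_0_l. simpl (0 + S K)%nat.
      rewrite (rs_ext_in _ (fun d => B * (s / r) ^ d)). rewrite rs_scal. unfold Rdiv at 2. rewrite Rmult_assoc.
      apply Rmult_le_compat_l; auto. apply geom_tail; auto.
      intros d Hd'. apply in_seq in Hd'. destruct (Nat.leb_spec d K); auto; lia.
      intros d Hd'. apply in_seq in Hd'. destruct (Nat.leb_spec d K); auto; lia.
Qed.

Lemma csum_nil {X} (f : X -> ser) : csum f [] = szero.
Proof. apply functional_extensionality; intro; reflexivity. Qed.
Lemma csum_cons {X} (f : X -> ser) x l : csum f (x :: l) = sadd (f x) (csum f l).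
Proof. apply functional_extensionality; intro; reflexivity. Qed.
Lemma smul_zero_l R : ser_mul szero R = szero.
Proof. apply functional_extensionality; intro w. rewrite ser_mul_cs. apply cs_zero. intros; apply Cmul_0_l. Qed.
Lemma smul_zero_r R : ser_mul R szero = szero.
Proof. apply functional_extensionality; intro w. rewrite ser_mul_cs. apply cs_zero. intros; apply Cmul_0_r. Qed.

Lemma smul_csum_l {X} (f : X -> ser) l R : ser_mul (csum f l) R = csum (fun x => ser_mul (f x) R) l.
Proof. induction l. rewrite !csum_nil, smul_zero_l; auto. rewrite !csum_cons, smul_add_l, IHl; auto. Qed.
Lemma smul_csum_r {X} (f : X -> ser) l R : ser_mul R (csum f l) = csum (fun x => ser_mul R (f x)) l.
Proof. induction l. rewrite !csum_nil, smul_zero_r; auto. rewrite !csum_cons, smul_add_r, IHl; auto. Qed.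

Lemma smul_csum_w {X Y} (f : X -> ser) l (g : Y -> ser) l' w :
  ser_mul (csum f l) (csum g l') w = cs (fun x => cs (fun y => ser_mul (f x) (g y) w) l') l.
Proof.
  rewrite smul_csum_l. unfold csum at 1. apply cs_ext; intro x. rewrite smul_csum_r. reflexivity.
Qed.

Lemma evp_csum m G T D : evp m G T D = csum (fun d => csum (fun u => sscal (G u) (mono u T)) (words m d)) (seq 0 (S D)).
Proof. reflexivity. Qed.

Lemma cs_trim (g : nat -> C) K N : (K <= N)%nat -> (forall i, (K < i)%nat -> g i = C0) ->
  cs g (seq 0 (S N)) = cs g (seq 0 (S K)).
Proof.
  intros HKN H. replace (S N) with (S K + (N - K))%nat by lia. rewrite seq_app, cs_app.
  rewrite (cs_zero _ (seq (0 + S K) (N - K))). apply Cadd_0_r. intros i Hi. apply in_seq in Hi. apply H. lia.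
Qed.

Lemma evp_mul_poly m P Q T K :
  ser_mul (evp m P T K) (evp m Q T K) = evp m (ser_mul (tr K P) (tr K Q)) T (K + K).
Proof.
  apply functional_extensionality; intro w.
  set (psi := fun u v => Cmul (Cmul (tr K P u) (tr K Q v)) (mono (u ++ v) T w)).
  set (g := fun i j => cs (fun u => cs (fun v => psi u v) (words m j)) (words m i)).
  transitivity (cs (fun i => cs (fun j => g i j) (seq 0 (S K))) (seq 0 (S K))).
  - rewrite !evp_csum. rewrite smul_csum_w. apply cs_ext_in; intros i Hi. apply in_seq in Hi.
    apply cs_ext_in; intros j Hj. apply in_seq in Hj.
    rewrite smul_csum_w. unfold g. apply cs_ext_in; intros u Hu. apply In_words in Hu.
    apply cs_ext_in; intros v Hv. apply In_words in Hv.
    rewrite smul_scal_l, smul_scal_r, <- mono_app. unfold sscal, psi. rewrite !tr_eq by lia. Cring.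
  - rewrite evp_w.
    transitivity (cs (fun d => cs (fun i => g i (d - i)%nat) (seq 0 (S d))) (seq 0 (S (K + K)))).
    + rewrite cs_reindex. symmetry.
      rewrite (cs_trim _ K (K + K)); [|lia|].
      * apply cs_ext_in; intros i Hi. apply in_seq in Hi. apply cs_trim. lia.
        intros j Hj. unfold g. apply cs_zero; intros u Hu. apply cs_zero; intros v Hv. apply In_words in Hv.
        unfold psi. rewrite (tr_zero K Q v) by lia. Cring.
      * intros i Hi. apply cs_zero; intros j Hj. unfold g. apply cs_zero; intros u Hu. apply In_words in Hu.
        apply cs_zero; intros v Hv. unfold psi. rewrite (tr_zero K P u) by lia. Cring.
    + apply cs_ext; intro d. unfold g. rewrite <- cs_split.
      apply cs_ext_in; intros q Hq. rewrite ser_mul_cs. rewrite <- cs_scal_r. apply cs_ext; intro k.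
      unfold psi. rewrite firstn_skipn. reflexivity.
Qed.

Lemma cs_single (f : nat -> C) i n : (i < n)%nat -> (forall x, x <> i -> f x = C0) -> cs f (seq 0 n) = f i.
Proof.
  intros Hi H. replace n with (i + S (n - S i))%nat at 1 by lia. rewrite seq_app. simpl.
  rewrite cs_app, cs_cons. rewrite (cs_zero _ (seq 0 i)), (cs_zero _ (seq (S i) _)).
  rewrite Cadd_0_l, Cadd_0_r. reflexivity.
  intros x Hx; apply in_seq in Hx; apply H; lia.
  intros x Hx; apply in_seq in Hx; apply H; lia.
Qed.

Lemma cvC_geo u l c q : 0 <= c -> 0 <= q < 1 -> (forall D, Cmod (Csub (u D) l) <= c * q ^ D) -> cvC u l.
Proof.
  intros Hc Hq H eps He.
  destruct (pow_lt_1_zero q ltac:(rewrite Rabs_pos_eq; lra) (eps / (c + 1))) as [N HN].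
  { apply Rdiv_lt_0_compat; lra. }
  exists N. intros k Hk. specialize (HN k Hk). rewrite Rabs_pos_eq in HN by (apply pow_le; lra).
  eapply Rle_lt_trans; [apply H|].
  apply Rle_lt_trans with (c * (eps / (c + 1))). apply Rmult_le_compat_l; lra.
  replace (c * (eps / (c + 1))) with (eps * (c / (c + 1))) by (field; lra).
  assert (c / (c+1) < 1) by (apply Rmult_lt_reg_r with (c+1); [lra|]; unfold Rdiv; rewrite Rmult_assoc, Rinv_l; lra).
  nra.
Qed.

Section Subst.
Variables (n : nat) (A a a' : R) (U : nat -> ser).
Hypotheses (HA : 0 < A) (Ha' : 0 < a') (Haa : a' < a) (HU : forall i, (i < n)%nat -> NB n A (U i) a').

Definition ev P := evalf n P U.
Definition inSa P := exists B, NB n a P B.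

Lemma ev_conv P : inSa P -> forall w, cvC (fun D => evp n P U D w) (ev P w).
Proof. intros [B HB]. apply (evalf_spec n n P U a A B a'); auto; lra. Qed.

Lemma ev_eq P V : inSa P -> (forall w, cvC (fun D => evp n P U D w) (V w)) -> ev P = V.
Proof. intros HP HV. apply functional_extensionality; intro w. eapply cvC_unique; [apply ev_conv; auto|apply HV]. Qed.

Lemma ev_bound P B : inSa P -> NB n a' P B -> NB n A (ev P) B.
Proof.
  intros HP HB. apply NB_limit with (fun D => evp n P U D); [lra|apply ev_conv; auto|].
  intros D. eapply NB_weaken. apply (NB_evp n n A P U a' D); [lra|auto].
  destruct HB as [_ HB]. eapply Rle_trans; [|apply (HB D)]. unfold pn. right. apply rs_ext; intro; ring.
Qed.

Lemma ev_sub P Q : inSa P -> inSa Q -> ev (ssub P Q) = ssub (ev P) (ev Q).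
Proof.
  intros HP HQ. apply ev_eq. destruct HP as [B1 H1], HQ as [B2 H2]. exists (B1 + B2). apply NB_sub; auto; lra.
  intros w. apply (cvC_ext (fun D => Csub (evp n P U D w) (evp n Q U D w))).
  intros D; rewrite evp_sub; reflexivity. apply cvC_sub; apply ev_conv; auto.
Qed.

Lemma ev_stable P K : inSa P -> (forall q, (K < length q)%nat -> P q = C0) -> ev P = evp n P U K.
Proof.
  intros HP HK. apply ev_eq; auto. intros w. apply cvC_ev with K. intros D HD. rewrite (evp_stable n P U K D); auto.
Qed.

Lemma inSa_sub P Q : inSa P -> inSa Q -> inSa (ssub P Q).
Proof. intros [B1 H1] [B2 H2]. exists (B1 + B2). apply NB_sub; auto; lra. Qed.
Lemma inSa_mul P Q : inSa P -> inSa Q -> inSa (ser_mul P Q).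
Proof. intros [B1 H1] [B2 H2]. exists (B1 * B2). apply NB_mul; auto; lra. Qed.
Lemma inSa_tr P K : inSa P -> inSa (tr K P).
Proof. intros [B1 H1]. exists B1. apply NB_tr; auto; lra. Qed.
Lemma inSa_scal c P : inSa P -> inSa (sscal c P).
Proof. intros [B1 H1]. exists (Cmod c * B1). apply NB_scal; auto; lra. Qed.
Lemma inSa_one : inSa ser_one.
Proof. exists 1. apply NB_one. Qed.
Lemma inSa_var i : (i < n)%nat -> inSa (svar i).
Proof. intros. exists a. apply NB_var; auto; lra. Qed.
Lemma inSa_csum {X} (f : X -> ser) l : (forall x, In x l -> inSa (f x)) -> inSa (csum f l).
Proof.
  induction l; intros H. rewrite csum_nil. exists 0. apply NB_zero.
  rewrite csum_cons. destruct (H a0 (or_introl eq_refl)) as [B1 H1]. destruct IHl as [B2 H2].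
  intros; apply H; simpl; auto. exists (B1 + B2). apply NB_add; auto; lra.
Qed.
Lemma inSa_mono q T : (forall x, In x q -> inSa (T x)) -> inSa (mono q T).
Proof.
  induction q; intros H. apply inSa_one. rewrite mono_cons. apply inSa_mul. apply H; simpl; auto.
  apply IHq; intros; apply H; simpl; auto.
Qed.

Lemma NB_a_a' P B : NB n a P B -> NB n a' P B.
Proof. apply NB_rad; lra. Qed.

Lemma ev_mul P Q : inSa P -> inSa Q -> ev (ser_mul P Q) = ser_mul (ev P) (ev Q).
Proof.
  intros HP HQ. pose proof HP as [B1 H1]. pose proof HQ as [B2 H2].
  assert (HB1 : 0 <= B1) by (eapply NB_nonneg; [|exact H1]; lra).
  assert (HB2 : 0 <= B2) by (eapply NB_nonneg; [|exact H2]; lra).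
  set (rho := a' / a).
  assert (Hrho : 0 <= rho < 1).
  { unfold rho. split. apply Rmult_le_pos; [lra|left; apply Rinv_0_lt_compat; lra].
    apply Rmult_lt_reg_r with a; [lra|]. unfold Rdiv. rewrite Rmult_assoc, Rinv_l by lra. lra. }
  set (t := fun K => (B1 + B2) * rho ^ (S K) / (1 - rho)).
  assert (HtP : forall K, NB n a' (ssub P (tr K P)) (t K)).
  { intros K. eapply NB_weaken. apply (NB_tr_tail n a a' P K B1); [lra|split; lra|exact H1]. fold rho. unfold t.
    unfold Rdiv. apply Rmult_le_compat_r. left; apply Rinv_0_lt_compat; lra.
    apply Rmult_le_compat_r. apply pow_le; lra. lra. }
  assert (HtQ : forall K, NB n a' (ssub Q (tr K Q)) (t K)).
  { intros K. eapply NB_weaken. apply (NB_tr_tail n a a' Q K B2); [lra|split; lra|exact H2]. fold rho. unfold t.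
    unfold Rdiv. apply Rmult_le_compat_r. left; apply Rinv_0_lt_compat; lra.
    apply Rmult_le_compat_r. apply pow_le; lra. lra. }
  assert (Ht0 : forall K, 0 <= t K).
  { intros K. unfold t. apply Rmult_le_pos. apply Rmult_le_pos. lra. apply pow_le; lra. left; apply Rinv_0_lt_compat; lra. }
  assert (Hpoly : forall K, ev (ser_mul (tr K P) (tr K Q)) = ser_mul (ev (tr K P)) (ev (tr K Q))).
  { intros K. rewrite (ev_stable (tr K P) K), (ev_stable (tr K Q) K), (ev_stable _ (K + K)).
    - rewrite !evp_tr. symmetry. apply evp_mul_poly.
    - apply inSa_mul; apply inSa_tr; auto.
    - intros q Hq. rewrite ser_mul_cs. apply cs_zero. intros k Hk. apply in_seq in Hk.
      destruct (le_lt_dec k K).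
      + rewrite (tr_zero K Q). apply Cmul_0_r. rewrite length_skipn. lia.
      + rewrite (tr_zero K P). apply Cmul_0_l. rewrite firstn_length_le; lia.
    - apply inSa_tr; auto.
    - intros; apply tr_zero; auto.
    - apply inSa_tr; auto.
    - intros; apply tr_zero; auto. }
  set (Z := ssub (ev (ser_mul P Q)) (ser_mul (ev P) (ev Q))).
  assert (HZ : forall K, NB n A Z (4 * (B1 + B2) * t K)).
  { intros K.
    set (X1 := sadd (ser_mul (ssub P (tr K P)) Q) (ser_mul (tr K P) (ssub Q (tr K Q)))).
    assert (E1 : X1 = ssub (ser_mul P Q) (ser_mul (tr K P) (tr K Q))).
    { unfold X1. rewrite smul_sub_l, smul_sub_r. apply functional_extensionality; intro w; unfold ssub, sadd; Cring. }
    assert (E : Z = sadd (ev X1) (sadd (ser_mul (ev (tr K P)) (ev (ssub (tr K Q) Q))) (ser_mul (ev (ssub (tr K P) P)) (ev Q)))).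
    { rewrite E1. rewrite ev_sub, Hpoly, !ev_sub; try apply inSa_mul; try apply inSa_tr; auto.
      unfold Z. rewrite !smul_sub_r, !smul_sub_l.
      apply functional_extensionality; intro w; unfold ssub, sadd; Cring. }
    rewrite E.
    replace (4 * (B1 + B2) * t K) with ((t K * B2 + B1 * t K) + (B1 * t K + t K * B2) + (2 * B1 * t K + 2 * B2 * t K)) by (unfold t; ring).
    assert (0 <= 2 * B1 * t K + 2 * B2 * t K) by (pose proof (Ht0 K); nra).
    eapply NB_weaken; [|apply Rplus_le_compat_l with (r := (t K * B2 + B1 * t K) + (B1 * t K + t K * B2)) in H; rewrite Rplus_0_r in H; exact H].
    apply NB_add; [lra| |apply NB_add; [lra| |]].
    - apply ev_bound.
      + rewrite E1. apply inSa_sub; apply inSa_mul; try apply inSa_tr; auto.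
      + apply NB_add; [lra| |]. apply NB_mul; [lra|auto|apply NB_a_a'; auto].
        apply NB_mul; [lra|apply NB_a_a', NB_tr; auto; lra|auto].
    - apply NB_mul; [lra| |]. apply ev_bound. apply inSa_tr; auto. apply NB_a_a', NB_tr; auto; lra.
      apply ev_bound. apply inSa_sub; try apply inSa_tr; auto. apply NB_ssub_sym; [lra|auto].
    - apply NB_mul; [lra| |]. apply ev_bound. apply inSa_sub; try apply inSa_tr; auto. apply NB_ssub_sym; [lra|auto].
      apply ev_bound; auto. apply NB_a_a'; auto. }
  assert (HZ0 : forall w, Z w = C0).
  { apply (small_geo_zero n A Z (4 * (B1 + B2) * ((B1 + B2) * rho / (1 - rho))) rho); auto.
    apply Rmult_le_pos. lra. apply Rmult_le_pos. apply Rmult_le_pos; lra. left; apply Rinv_0_lt_compat; lra.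
    intros K. eapply NB_weaken. apply (HZ K). unfold t. right. simpl. field. lra. }
  apply functional_extensionality; intro w. specialize (HZ0 w). unfold Z, ssub in HZ0.
  replace (ev (ser_mul P Q) w) with (Cadd (Csub (ev (ser_mul P Q) w) (ser_mul (ev P) (ev Q) w)) (ser_mul (ev P) (ev Q) w)) by Cring.
  rewrite HZ0. apply Cadd_0_l.
Qed.

Lemma ev_add P Q : inSa P -> inSa Q -> ev (sadd P Q) = sadd (ev P) (ev Q).
Proof.
  intros HP HQ. apply ev_eq; auto. destruct HP as [B1 H1], HQ as [B2 H2]. exists (B1 + B2). apply NB_add; auto; lra.
  intros w. apply (cvC_ext (fun D => Cadd (evp n P U D w) (evp n Q U D w))).
  intros D; rewrite evp_add; reflexivity. apply cvC_plus; apply ev_conv; auto.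
Qed.
Lemma ev_scal c P : inSa P -> ev (sscal c P) = sscal c (ev P).
Proof.
  intros HP. apply ev_eq; auto. apply inSa_scal; auto.
  intros w. apply (cvC_ext (fun D => Cmul c (evp n P U D w))).
  intros D; rewrite evp_scal; reflexivity. apply cvC_scal; apply ev_conv; auto.
Qed.
Lemma ev_zero : ev szero = szero.
Proof.
  apply ev_eq; auto. exists 0. apply NB_zero. intros w. apply cvC_ev with 0%nat. intros D _.
  rewrite evp_w. apply cs_zero; intros; apply cs_zero; intros. apply Cmul_0_l.
Qed.
Lemma ev_csum {X} (f : X -> ser) l : (forall x, In x l -> inSa (f x)) -> ev (csum f l) = csum (fun x => ev (f x)) l.
Proof.
  induction l; intros H. rewrite !csum_nil. apply ev_zero.
  rewrite !csum_cons. rewrite ev_add, IHl; auto. intros; apply H; simpl; auto. apply H; simpl; auto.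
  apply inSa_csum; auto. intros; apply H; simpl; auto.
Qed.

Lemma ev_one : ev ser_one = ser_one.
Proof.
  rewrite (ev_stable _ 0). 2: apply inSa_one.
  - apply functional_extensionality; intro w. rewrite evp_w. unfold cs; simpl.
    rewrite mono_nil, Cmul_1_l, !Cadd_0_r. reflexivity.
  - intros q Hq. destruct q; simpl in Hq; [lia|reflexivity].
Qed.

Lemma ev_var i : (i < n)%nat -> ev (svar i) = U i.
Proof.
  intros Hi. rewrite (ev_stable _ 1). 2: apply inSa_var; auto.
  - apply functional_extensionality; intro w. rewrite evp_w. simpl seq. rewrite cs_cons, cs_cons, cs_nil, Cadd_0_r.
    rewrite words_0, cs_cons, cs_nil. unfold svar at 1. simpl. rewrite Cmul_0_l, !Cadd_0_l.
    rewrite app_nil_r, cs_map. rewrite (cs_single _ i n Hi).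
    + unfold svar. destruct (list_eq_dec Nat.eq_dec [i] [i]); [|congruence]. rewrite Cmul_1_l.
      rewrite mono_cons, mono_nil, smul_one_r. reflexivity.
    + intros x Hx. unfold svar. destruct (list_eq_dec Nat.eq_dec [x] [i]). inversion e; congruence. apply Cmul_0_l.
  - intros q Hq. unfold svar. destruct (list_eq_dec Nat.eq_dec q [i]); auto. subst; simpl in Hq; lia.
Qed.

Lemma ev_mono q T : (forall x, In x q -> inSa (T x)) -> ev (mono q T) = mono q (fun x => ev (T x)).
Proof.
  induction q; intros H. rewrite !mono_nil. apply ev_one.
  rewrite !mono_cons. rewrite ev_mul. rewrite IHq; auto.
  intros; apply H; simpl; auto. apply H; simpl; auto. apply inSa_mono; intros; apply H; simpl; auto.
Qed.

Lemma csum_ext_in {X} (f g : X -> ser) l : (forall x, In x l -> f x = g x) -> csum f l = csum g l.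
Proof. intros H. apply functional_extensionality; intro w. unfold csum. apply cs_ext_in. intros x Hx. rewrite H; auto. Qed.

Lemma ev_evp m G T D : (forall x, (x < m)%nat -> inSa (T x)) -> ev (evp m G T D) = evp m G (fun x => ev (T x)) D.
Proof.
  intros HT.
  assert (Hq : forall d u, In u (words m d) -> forall x, In x u -> inSa (T x)).
  { intros d u Hu. apply In_words in Hu. destruct Hu as [_ Hv]. intros x Hx. apply HT. eapply Forall_forall in Hv; eauto. }
  rewrite !evp_csum. rewrite ev_csum.
  2: { intros d _. apply inSa_csum. intros u Hu. apply inSa_scal. apply inSa_mono. eapply Hq; eauto. }
  apply csum_ext_in. intros d _. rewrite ev_csum.
  2: { intros u Hu. apply inSa_scal. apply inSa_mono. eapply Hq; eauto. }
  apply csum_ext_in. intros u Hu. rewrite ev_scal, ev_mono. reflexivity.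
  eapply Hq; eauto. apply inSa_mono. eapply Hq; eauto.
Qed.

Lemma subst_main m G T R h M V : NB m R G h -> 0 <= M < R -> (forall x, (x < m)%nat -> NB n a (T x) M) ->
  (forall w, cvC (fun D => evp m G T D w) (V w)) ->
  forall w, cvC (fun D => evp m G (fun x => ev (T x)) D w) (ev V w).
Proof.
  intros HG HM HT HV.
  destruct (eval_exist m n G T R a h M) as [V0 [HV0 Htail]]; try lra; auto.
  assert (E : V0 = V).
  { apply functional_extensionality; intro w. eapply cvC_unique; eauto. }
  subst V0.
  assert (HR : 0 < R) by lra.
  set (rho := M / R).
  assert (Hrho : 0 <= rho < 1).
  { unfold rho. split. apply Rmult_le_pos; [lra|left; apply Rinv_0_lt_compat; lra].
    apply Rmult_lt_reg_r with R; [lra|]. unfold Rdiv. rewrite Rmult_assoc, Rinv_l by lra. lra. }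
  assert (Hh : 0 <= h) by (eapply NB_nonneg; [|exact HG]; lra).
  assert (HTa : forall x, (x < m)%nat -> inSa (T x)) by (intros x Hx; exists M; auto).
  assert (Hevp : forall D, inSa (evp m G T D)).
  { intros D. exists (rs (fun d => blk m G d * M ^ d) (seq 0 (S D))). apply NB_evp; auto; lra. }
  assert (HVa : inSa V).
  { exists (h / (1 - rho)). apply NB_limit with (fun D => evp m G T D); [lra|auto|].
    intros D. eapply NB_weaken. apply NB_evp; [lra|exact HT].
    eapply Rle_trans. apply rs_le. intro d. apply (blk_geom m R G h d HR HG M ltac:(lra)).
    rewrite rs_scal. fold rho. apply Rle_trans with (h * (rho ^ 0 / (1 - rho))).
    apply Rmult_le_compat_l; auto. apply geom_tail; auto. simpl. right; unfold Rdiv; ring. }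
  intros w.
  apply (cvC_geo _ _ (h * rho / (1 - rho) / A ^ length w) rho).
  - apply Rmult_le_pos. apply Rmult_le_pos. apply Rmult_le_pos; lra. left; apply Rinv_0_lt_compat; lra.
    left; apply Rinv_0_lt_compat, pow_lt; lra.
  - exact Hrho.
  - intros D. rewrite <- ev_evp by auto.
    assert (Hd : NB n A (ev (ssub V (evp m G T D))) (h * rho ^ S D / (1 - rho))).
    { apply ev_bound. apply inSa_sub; auto. apply NB_a_a'. apply Htail. }
    rewrite ev_sub in Hd by auto.
    pose proof (coef_small n A _ _ w HA Hd) as Hc. unfold ssub in Hc. rewrite Cmod_sub_sym.
    eapply Rle_trans; [exact Hc|]. right. simpl. unfold Rdiv. ring.
Qed.

End Subst.

Lemma dq0_eq n j q : dq0 n j q = if list_eq_dec Nat.eq_dec q [(n + j)%nat] then C1 else C0.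
Proof.
  destruct (list_eq_dec Nat.eq_dec q [(n + j)%nat]) as [E|E].
  - subst. unfold dq0, fdq. simpl. rewrite Nat.eqb_refl. simpl. apply C_ext; simpl; ring.
  - unfold dq0. fold (cs (fun p => Cmul (ev0 (fst p)) (ev0 (snd p))) (fdq n j q)).
    apply cs_zero. intros p Hp. unfold fdq in Hp. apply in_flat_map in Hp. destruct Hp as [k [Hk Hp]].
    apply in_seq in Hk. destruct (Nat.eqb_spec (nth k q 0%nat) (n + j)); [|destruct Hp]. destruct Hp as [<-|[]]. cbn [fst snd].
    destruct (firstn k q) eqn:E1; [|apply Cmul_0_l].
    destruct (skipn (S k) q) eqn:E2; [|apply Cmul_0_r].
    exfalso. apply E. assert (Hk0 : k = 0%nat).
    { destruct k; auto. apply (f_equal (@length nat)) in E1. rewrite firstn_length_le in E1 by lia. simpl in E1. lia. }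
    subst k. apply (f_equal (@length nat)) in E2. rewrite length_skipn in E2. simpl in E2.
    destruct q as [|x [|y q]]; simpl in *; try lia. subst; reflexivity.
Qed.

Lemma jac_coef n F Q : jac0_is n F Q -> forall i j, (i < n)%nat -> (j < n)%nat -> Q i j = F i [(n + j)%nat].
Proof.
  intros H i j Hi Hj. specialize (H i j Hi Hj). apply Cinf_cvC in H.
  set (s := fun d => cs (fun q => Cmul (F i q) (dq0 n j q)) (words (2 * n) d)).
  assert (Hs : forall d, s d = if Nat.eqb d 1 then F i [(n + j)%nat] else C0).
  { intros d. unfold s. destruct (Nat.eqb_spec d 1).
    - subst. rewrite words_1, cs_map. rewrite (cs_single _ (n + j) (2 * n)); [|lia|].
      + rewrite dq0_eq. destruct (list_eq_dec _ _ _); [|congruence]. apply Cmul_1_r.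
      + intros x Hx. rewrite dq0_eq. destruct (list_eq_dec _ _ _). inversion e; congruence. apply Cmul_0_r.
    - apply cs_zero. intros q Hq. apply In_words in Hq. rewrite dq0_eq.
      destruct (list_eq_dec _ _ _). subst; simpl in Hq; lia. apply Cmul_0_r. }
  eapply cvC_unique. exact H.
  apply cvC_ev with 1%nat. intros D HD. unfold psC.
  fold s. replace (S D) with (2 + (D - 1))%nat by lia. rewrite seq_app, cs_app.
  rewrite (cs_zero _ (seq (0 + 2) _)). rewrite Cadd_0_r. change (seq 0 2) with [0%nat; 1%nat].
  pose proof Hs as Hs'. unfold s, cs in Hs'. rewrite cs_cons, cs_cons, cs_nil, (Hs' 0%nat), (Hs' 1%nat). simpl. rewrite Cadd_0_l, Cadd_0_r. reflexivity.
  intros d Hd. apply in_seq in Hd. pose proof (Hs d) as Hs'. unfold s, cs in Hs'. rewrite Hs'. destruct (Nat.eqb_spec d 1); auto; lia.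
Qed.

Lemma evp_csum_G {X} m (f : X -> ser) l T D : evp m (csum f l) T D = csum (fun x => evp m (f x) T D) l.
Proof.
  induction l. rewrite !csum_nil. apply functional_extensionality; intro w. rewrite evp_w.
  apply cs_zero; intros; apply cs_zero; intros. apply Cmul_0_l.
  rewrite !csum_cons, evp_add, IHl. reflexivity.
Qed.

Lemma evp_svar m i T D : (i < m)%nat -> (1 <= D)%nat -> evp m (svar i) T D = T i.
Proof.
  intros Hi HD. rewrite (evp_stable m (svar i) T 1 D); auto.
  - apply functional_extensionality; intro w. rewrite evp_w. simpl seq. rewrite cs_cons, cs_cons, cs_nil, Cadd_0_r.
    rewrite words_0, cs_cons, cs_nil. unfold svar at 1. simpl. rewrite Cmul_0_l, !Cadd_0_l.
    rewrite app_nil_r, cs_map. rewrite (cs_single _ i m Hi).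
    + unfold svar. destruct (list_eq_dec Nat.eq_dec [i] [i]); [|congruence]. rewrite Cmul_1_l.
      rewrite mono_cons, mono_nil, smul_one_r. reflexivity.
    + intros x Hx. unfold svar. destruct (list_eq_dec Nat.eq_dec [x] [i]). inversion e; congruence. apply Cmul_0_l.
  - intros q Hq. unfold svar. destruct (list_eq_dec Nat.eq_dec q [i]); auto. subst; simpl in Hq; lia.
Qed.

Lemma cvC_lim_eq u l l' : cvC u l -> l = l' -> cvC u l'.
Proof. intros H E; subst; auto. Qed.

Section HDef.
Variables (n : nat) (F : nat -> ser) (Q Qi : nat -> nat -> C).
Hypotheses (HQ : forall i j, (i < n)%nat -> (j < n)%nat -> Q i j = F i [(n + j)%nat])
  (Hinv : forall i j, (i < n)%nat -> (j < n)%nat -> Cmatmul n Q Qi i j = Cid i j /\ Cmatmul n Qi Q i j = Cid i j).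

Definition Hser j := ssub (svar (n + j)) (csum (fun k => sscal (Qi j k) (F k)) (seq 0 n)).

Lemma Hser_nil j : (forall k, (k < n)%nat -> F k [] = C0) -> Hser j [] = C0.
Proof.
  intros H0. unfold Hser, ssub, csum, svar. simpl. rewrite cs_zero. apply C_ext; simpl; ring.
  intros k Hk. apply in_seq in Hk. unfold sscal. rewrite H0 by lia. apply Cmul_0_r.
Qed.

Lemma Hser_lin j l : (j < n)%nat -> (l < n)%nat -> Hser j [(n + l)%nat] = C0.
Proof.
  intros Hj Hl. unfold Hser, ssub, csum. unfold sscal.
  rewrite (cs_ext_in _ (fun k => Cmul (Qi j k) (Q k l))).
  2: { intros k Hk. apply in_seq in Hk. rewrite HQ by lia. reflexivity. }
  change (cs (fun k => Cmul (Qi j k) (Q k l)) (seq 0 n)) with (Cmatmul n Qi Q j l). rewrite (proj2 (Hinv j l Hj Hl)). unfold svar, Cid.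
  destruct (Nat.eqb_spec j l); destruct (list_eq_dec Nat.eq_dec _ _); try (inversion e; lia); subst; try congruence; apply Csub_diag.
Qed.

Lemma NB_Hser A L c j : 0 <= A -> (j < n)%nat -> (forall k, (k < n)%nat -> NB (2 * n) A (F k) L) ->
  (forall k, (k < n)%nat -> Cmod (Qi j k) <= c) -> 0 <= L ->
  NB (2 * n) A (Hser j) (A + rs (fun _ => c * L) (seq 0 n)).
Proof.
  intros HA Hj HF Hc HL. unfold Hser. apply NB_sub; auto. apply NB_var; auto; lia.
  eapply NB_weaken. apply NB_csum; auto. intros k Hk. apply in_seq in Hk. apply NB_scal; auto. apply HF; lia.
  apply rs_le_in. intros k Hk. apply in_seq in Hk. apply Rmult_le_compat_r; auto. apply Hc; lia.
Qed.

Lemma evp_Hser j T D : (j < n)%nat -> (1 <= D)%nat ->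
  evp (2 * n) (Hser j) T D = ssub (T (n + j)%nat) (csum (fun k => sscal (Qi j k) (evp (2 * n) (F k) T D)) (seq 0 n)).
Proof.
  intros Hj HD. unfold Hser. rewrite evp_sub, evp_svar by lia. f_equal.
  rewrite evp_csum_G. apply csum_ext_in. intros k _. apply evp_scal.
Qed.

Lemma F_to_H B V j : (j < n)%nat ->
  (forall k, (k < n)%nat -> eval_is (2 * n) (F k) (pair_tuple n B V) (fun _ => C0)) ->
  forall w, cvC (fun D => evp (2 * n) (Hser j) (pair_tuple n B V) D w) (V j w).
Proof.
  intros Hj HF w.
  apply (cvC_ext (fun D => if Nat.leb 1 D then Csub (V j w) (cs (fun k => Cmul (Qi j k) (evp (2 * n) (F k) (pair_tuple n B V) D w)) (seq 0 n)) else evp (2 * n) (Hser j) (pair_tuple n B V) D w)).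
  - intros D. destruct (Nat.leb_spec 1 D); auto. rewrite evp_Hser by auto.
    unfold ssub. rewrite pair_tuple_ge by lia. replace (n + j - n)%nat with j by lia. reflexivity.
  - assert (E0 : Csub (V j w) (cs (fun k => Cmul (Qi j k) C0) (seq 0 n)) = V j w).
    { rewrite cs_zero. apply C_ext; simpl; ring. intros; apply Cmul_0_r. }
    apply (cvC_lim_eq _ (Csub (V j w) (cs (fun k => Cmul (Qi j k) C0) (seq 0 n)))); [|exact E0].
    intros eps He. 
    assert (Hc : cvC (fun D => Csub (V j w) (cs (fun k => Cmul (Qi j k) (evp (2 * n) (F k) (pair_tuple n B V) D w)) (seq 0 n)))
                   (Csub (V j w) (cs (fun k => Cmul (Qi j k) C0) (seq 0 n)))).
    { apply cvC_sub. apply cvC_ev with 0%nat; auto. apply cvC_cs. intros k Hk. apply in_seq in Hk.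
      apply cvC_scal. specialize (HF k ltac:(lia)). exact (proj1 (eval_is_iff _ _ _ _) HF w). }
    destruct (Hc eps He) as [N HN]. exists (S N). intros k Hk. cbv beta. destruct (Nat.leb_spec 1 k); [|lia]. apply HN; lia.
Qed.

Lemma H_to_F B V (Phi : nat -> ser) :
  (forall j, (j < n)%nat -> forall w, cvC (fun D => evp (2 * n) (Hser j) (pair_tuple n B V) D w) (V j w)) ->
  (forall k, (k < n)%nat -> forall w, cvC (fun D => evp (2 * n) (F k) (pair_tuple n B V) D w) (Phi k w)) ->
  forall k, (k < n)%nat -> eval_is (2 * n) (F k) (pair_tuple n B V) (fun _ => C0).
Proof.
  intros HH HP k Hk. apply eval_is_iff. intros w.
  assert (Hz : forall j, (j < n)%nat -> cs (fun l => Cmul (Qi j l) (Phi l w)) (seq 0 n) = C0).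
  { intros j Hj.
    assert (Hc : cvC (fun D => evp (2 * n) (Hser j) (pair_tuple n B V) D w) (Csub (V j w) (cs (fun l => Cmul (Qi j l) (Phi l w)) (seq 0 n)))).
    { apply (cvC_ext (fun D => if Nat.leb 1 D then Csub (V j w) (cs (fun l => Cmul (Qi j l) (evp (2 * n) (F l) (pair_tuple n B V) D w)) (seq 0 n)) else evp (2 * n) (Hser j) (pair_tuple n B V) D w)).
      - intros D. destruct (Nat.leb_spec 1 D); auto. rewrite evp_Hser by auto.
        unfold ssub. rewrite pair_tuple_ge by lia. replace (n + j - n)%nat with j by lia. reflexivity.
      - assert (Hc : cvC (fun D => Csub (V j w) (cs (fun l => Cmul (Qi j l) (evp (2 * n) (F l) (pair_tuple n B V) D w)) (seq 0 n)))
                   (Csub (V j w) (cs (fun l => Cmul (Qi j l) (Phi l w)) (seq 0 n)))).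
        { apply cvC_sub. apply cvC_ev with 0%nat; auto. apply cvC_cs. intros l Hl. apply in_seq in Hl.
          apply cvC_scal. apply HP. lia. }
        intros eps He. destruct (Hc eps He) as [N HN]. exists (S N). intros D HD.
        cbv beta. destruct (Nat.leb_spec 1 D); [|lia]. apply HN; lia. }
    pose proof (cvC_unique _ _ _ Hc (HH j Hj w)) as E.
    replace (cs (fun l => Cmul (Qi j l) (Phi l w)) (seq 0 n)) with (Csub (V j w) (Csub (V j w) (cs (fun l => Cmul (Qi j l) (Phi l w)) (seq 0 n)))) by Cring.
    rewrite E. apply Csub_diag. }
  assert (HPk : Phi k w = C0).
  { transitivity (cs (fun j => Cmul (Q k j) (cs (fun l => Cmul (Qi j l) (Phi l w)) (seq 0 n))) (seq 0 n)).
    - rewrite (cs_ext _ (fun j => cs (fun l => Cmul (Cmul (Q k j) (Qi j l)) (Phi l w)) (seq 0 n))).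
      2: { intros j. rewrite <- cs_scal_l. apply cs_ext; intro; apply Cmul_assoc. }
      rewrite cs_swap. rewrite (cs_ext_in _ (fun l => Cmul (Cid k l) (Phi l w))).
      + unfold Cid. rewrite (cs_single _ k n Hk). rewrite Nat.eqb_refl. symmetry; apply Cmul_1_l.
        intros x Hx. destruct (Nat.eqb_spec k x); [congruence|]. apply Cmul_0_l.
      + intros l Hl. apply in_seq in Hl. rewrite cs_scal_r. f_equal. apply (proj1 (Hinv k l Hk ltac:(lia))).
    - apply cs_zero. intros j Hj. apply in_seq in Hj. rewrite Hz by lia. apply Cmul_0_r. }
  rewrite <- HPk. apply HP; auto.
Qed.

End HDef.

Lemma params A h C a : 1 < A -> 0 < h -> C = 2 * h / A + 1 -> 0 < a -> 8 * C * a <= A -> 16 * h * C * a <= A ^ 2 ->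
  2 * (2 * C * a) / A < 1 /\ Lc A h (2 * C * a) <= 1 / 2 /\
  h / A * a + h * ((2 * C * a / A) ^ 2 / (1 - 2 * C * a / A)) <= C * a.
Proof.
  intros HA Hh HC Ha H1 H2.
  assert (HC1 : 1 <= C) by (rewrite HC; assert (0 <= 2 * h / A) by (apply Rmult_le_pos; [lra|left; apply Rinv_0_lt_compat; lra]); lra).
  set (t := C * a). assert (Ht : 0 < t) by (unfold t; nra).
  assert (H1' : 8 * t <= A) by (unfold t; lra).
  assert (H2' : 16 * h * t <= A * A) by (unfold t; simpl in H2; nra).
  assert (HhA : h / A * a = (C - 1) / 2 * a) by (rewrite HC; field; lra).
  split; [|split].
  - replace (2 * (2 * C * a) / A) with (4 * t / A) by (unfold t; field; lra).
    apply Rmult_lt_reg_r with A; [lra|]. unfold Rdiv. rewrite Rmult_assoc, Rinv_l by lra. lra.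
  - unfold Lc. replace (h / A * (2 * (2 * C * a) / A / (1 - 2 * (2 * C * a) / A))) with (4 * h * t / (A * (A - 4 * t))).
    2: { unfold t. field. unfold t in H1'. split; lra. }
    assert (0 < A * (A - 4 * t)) by (apply Rmult_lt_0_compat; lra).
    apply Rmult_le_reg_r with (A * (A - 4 * t)); auto. unfold Rdiv. rewrite Rmult_assoc, Rinv_l by lra. nra.
  - rewrite HhA. replace (h * ((2 * C * a / A) ^ 2 / (1 - 2 * C * a / A))) with (4 * h * t * t / (A * (A - 2 * t))).
    2: { unfold t. field. unfold t in H1'. split; lra. }
    assert (0 < A * (A - 2 * t)) by (apply Rmult_lt_0_compat; lra).
    assert (4 * h * t * t / (A * (A - 2 * t)) <= t / 2).
    { assert (K1 : 2 * A * t <= A * A / 4) by nra.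
      assert (K2 : 8 * h * t <= A * (A - 2 * t)) by nra.
      apply Rmult_le_reg_r with (A * (A - 2 * t)); auto.
      replace (4 * h * t * t / (A * (A - 2 * t)) * (A * (A - 2 * t))) with (4 * h * t * t) by (field; lra).
      nra. }
    assert ((C - 1) / 2 * a <= t / 2) by (unfold t; nra). lra.
Qed.

Lemma finite_bound (Pr : nat -> R -> Prop) n : (forall i x y, Pr i x -> x <= y -> Pr i y) ->
  (forall i, (i < n)%nat -> exists x, 0 <= x /\ Pr i x) -> exists y, 0 <= y /\ forall i, (i < n)%nat -> Pr i y.
Proof.
  intros Hm. induction n; intros H.
  - exists 0. split; [lra|]. intros; lia.
  - destruct IHn as [y [Hy Hy']]. intros; apply H; lia.
    destruct (H n ltac:(lia)) as [x [Hx Hx']]. exists (y + x). split; [lra|].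
    intros i Hi. destruct (Nat.eq_dec i n). subst. apply (Hm _ x); auto; lra. apply (Hm _ y); auto. apply Hy'; lia. lra.
Qed.

Lemma finite_lt (Pr : nat -> R -> Prop) n a : (forall i x y, Pr i x -> x <= y -> Pr i y) ->
  (forall i, (i < n)%nat -> exists x, x < a /\ Pr i x) -> exists y, y < a /\ forall i, (i < n)%nat -> Pr i y.
Proof.
  intros Hm. induction n; intros H.
  - exists (a - 1). split; [lra|]. intros; lia.
  - destruct IHn as [y [Hy Hy']]. intros; apply H; lia.
    destruct (H n ltac:(lia)) as [x [Hx Hx']]. exists (Rmax y x). split. apply Rmax_lub_lt; auto.
    intros i Hi. destruct (Nat.eq_dec i n). subst. apply (Hm _ x); auto. apply Rmax_r.
    apply (Hm _ y); auto. apply Hy'; lia. apply Rmax_l.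
Qed.

Theorem mainTheorem1 (n : nat) (A : R) (F : nat -> ser) :
  1 < A ->
  (forall i, (i < n)%nat -> in_space (2 * n) A (F i)) ->
  (forall i, (i < n)%nat -> F i nil = C0) ->
  (exists Q, jac0_is n F Q /\ Cinvertible n Q) ->
  exists a0 Cst : R, 0 < a0 < A /\
    forall a, 0 < a < a0 ->
      exists f : nat -> ser,
        (forall i, (i < n)%nat -> in_space n a (f i)) /\
        forall U : nat -> ser,
          (forall i, (i < n)%nat -> in_space n A (U i) /\ norm_lt n A (U i) a) ->
          exists V : nat -> ser,
            (forall i, (i < n)%nat -> in_space n A (V i) /\ norm_lt n A (V i) (Cst * a)) /\
            (forall i, (i < n)%nat -> eval_is (2 * n) (F i) (pair_tuple n U V) (fun _ => C0)) /\
            (forall i, (i < n)%nat -> eval_is n (f i) U (V i)) /\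
            (forall V' : nat -> ser,
               (forall i, (i < n)%nat -> in_space n A (V' i) /\ norm_lt n A (V' i) (Cst * a)) ->
               (forall i, (i < n)%nat -> eval_is (2 * n) (F i) (pair_tuple n U V') (fun _ => C0)) ->
               forall i w, (i < n)%nat -> V' i w = V i w).
Proof.
  intros HA Hsp H0F [Q [Hjac [Qi Hinv]]].
  pose proof (jac_coef n F Q Hjac) as HQ.
  destruct (finite_bound (fun k y => NB (2 * n) A (F k) y) n) as [L [HL0 HL]].
  { intros; eapply NB_weaken; eauto. }
  { intros k Hk. destruct (Hsp k Hk) as [Hs [l Hl]]. exists l.
    assert (NB (2 * n) A (F k) l) by (apply has_norm_NB; auto; lra). split; auto. eapply NB_nonneg; [|eauto]; lra. }
  destruct (finite_bound (fun j y => forall k, (k < n)%nat -> Cmod (Qi j k) <= y) n) as [c [Hc0 Hc]].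
  { intros i x y H1 H2 k Hk. specialize (H1 k Hk). lra. }
  { intros j Hj. apply (finite_bound (fun k y => Cmod (Qi j k) <= y) n).
    intros; lra. intros k Hk. exists (Cmod (Qi j k)). split; [apply Cmod_ge0|lra]. }
  set (h := A + rs (fun _ => c * L) (seq 0 n) + 1).
  assert (Hrs : 0 <= rs (fun _ => c * L) (seq 0 n)) by (apply rs_nonneg; intros; nra).
  assert (Hh : 1 < h) by (unfold h; lra).
  set (H := Hser n F Qi).
  assert (HG : forall j, (j < n)%nat -> NB (2 * n) A (H j) h).
  { intros j Hj. eapply NB_weaken. apply NB_Hser; auto; lra. unfold h; lra. }
  assert (HH0 : forall j, (j < n)%nat -> H j [] = C0) by (intros; apply Hser_nil; auto).
  assert (HH1 : forall j k, (j < n)%nat -> (k < n)%nat -> H j [(n + k)%nat] = C0).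
  { intros; apply (Hser_lin n F Q Qi); auto. }
  set (C := 2 * h / A + 1).
  assert (HC1 : 1 <= C) by (unfold C; assert (0 <= 2 * h / A) by (apply Rmult_le_pos; [lra|left; apply Rinv_0_lt_compat; lra]); lra).
  set (a0 := Rmin (A / (8 * C)) (A ^ 2 / (16 * h * C))).
  assert (Ha01 : a0 <= A / (8 * C)) by apply Rmin_l.
  assert (Ha02 : a0 <= A ^ 2 / (16 * h * C)) by apply Rmin_r.
  assert (Ha0pos : 0 < a0).
  { unfold a0. apply Rmin_glb_lt; apply Rdiv_lt_0_compat; try nra. }
  exists a0, (2 * C). split.
  { split; auto. eapply Rle_lt_trans; [exact Ha01|]. apply Rmult_lt_reg_r with (8 * C); [lra|].
    unfold Rdiv. rewrite Rmult_assoc, Rinv_l by lra. nra. }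
  intros a [Ha Ha'].
  assert (E1 : 8 * C * a <= A).
  { assert (a <= A / (8 * C)) by lra. apply Rmult_le_reg_r with (/ (8 * C)). apply Rinv_0_lt_compat; lra.
    replace (8 * C * a * / (8 * C)) with a by (field; lra). exact H0. }
  assert (E2 : 16 * h * C * a <= A ^ 2).
  { assert (a <= A ^ 2 / (16 * h * C)) by lra. apply Rmult_le_reg_r with (/ (16 * h * C)). apply Rinv_0_lt_compat; nra.
    replace (16 * h * C * a * / (16 * h * C)) with a by (field; split; lra). exact H0. }
  destruct (params A h C a HA ltac:(lra) eq_refl Ha E1 E2) as [Hs [HLc Hself]].
  set (M := 2 * C * a).
  assert (HaM : a <= M) by (unfold M; nra).
  assert (HMA : M < A) by (unfold M; nra).
  assert (HrhoM : 0 <= C * a <= M) by (unfold M; split; nra).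
  destruct (picard_fix n a A h a M (C * a) H svar Ha ltac:(lra) ltac:(lra) HaM HrhoM Hs HG HH0 HH1)
    as [f [Hf Hfix]].
  { intros i Hi. apply NB_var; auto; lra. }
  { lra. }
  { exact HLc. }
  { exact Hself. }
  exists f. split.
  { intros i Hi. destruct (Hf i Hi) as [Hs' Hb]. split; auto. destruct (NB_has_norm n a (f i) (C * a)) as [l [Hl _]]; eauto; lra. }
  intros U HU.
  destruct (finite_lt (fun i y => NB n A (U i) y) n a) as [b [Hb HbU]].
  { intros; eapply NB_weaken; eauto. }
  { intros i Hi. destruct (HU i Hi) as [[Hs' _] [l [Hl Hla]]]. exists l. split; auto. apply has_norm_NB; auto; lra. }
  set (a' := Rmax b (a / 2)).
  assert (Ha'a : a' < a) by (unfold a'; apply Rmax_lub_lt; lra).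
  assert (Ha'p : 0 < a') by (unfold a'; eapply Rlt_le_trans; [|apply Rmax_r]; lra).
  assert (HUa' : forall i, (i < n)%nat -> NB n A (U i) a') by (intros; eapply NB_weaken; [apply HbU; auto|apply Rmax_l]).
  assert (HA0 : 0 < A) by lra.
  set (V := fun j => ev n U (f j)).
  assert (HfSa : forall j, (j < n)%nat -> inSa n a (f j)) by (intros j Hj; exists (C * a); auto).
  assert (HVconv : forall j, (j < n)%nat -> forall w, cvC (fun D => evp n (f j) U D w) (V j w)).
  { intros j Hj. apply (ev_conv n A a a' U); auto. }
  assert (HVb : forall j, (j < n)%nat -> NB n A (V j) (C * a)).
  { intros j Hj. apply (ev_bound n A a a' U); auto. apply NB_rad with a; [lra|auto]. }
  assert (HVfix : forall j, (j < n)%nat -> forall w, cvC (fun D => evp (2 * n) (H j) (pair_tuple n U V) D w) (V j w)).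
  { intros j Hj w.
    pose proof (subst_main n A a a' U HA0 Ha'p Ha'a HUa' (2 * n) (H j) (pair_tuple n svar f) A h M (f j) (HG j Hj) ltac:(lra)) as Hsm.
    eapply cvC_ext; [|apply Hsm]. 
    - intros D. apply (f_equal (fun P => P w)). apply evp_ext_T. intros x Hx. destruct (Nat.ltb_spec x n).
      + rewrite !pair_tuple_lt by auto. apply (ev_var n A a a' U); auto.
      + rewrite !pair_tuple_ge by auto. reflexivity.
    - intros x Hx. destruct (Nat.ltb_spec x n).
      + rewrite pair_tuple_lt by auto. eapply NB_weaken; [apply NB_var; auto; lra|lra].
      + rewrite pair_tuple_ge by auto. eapply NB_weaken; [apply Hf; lia|lra].
    - apply Hfix; auto. }
  assert (HTb : forall (W : nat -> ser), (forall j, (j < n)%nat -> NB n A (W j) M) -> forall x, (x < 2 * n)%nat -> NB n A (pair_tuple n U W x) M).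
  { intros W HW x Hx. destruct (Nat.ltb_spec x n).
    + rewrite pair_tuple_lt by auto. eapply NB_weaken; [apply HUa'; auto|lra].
    + rewrite pair_tuple_ge by auto. apply HW. lia. }
  assert (HUa : forall i, (i < n)%nat -> NB n A (U i) a) by (intros; eapply NB_weaken; [apply HUa'; auto|lra]).
  exists V. split; [|split; [|split]].
  - intros i Hi. destruct (HVb i Hi) as [Hs' Hb']. split.
    + split; auto. destruct (NB_has_norm n A (V i) (C * a)) as [l [Hl _]]; eauto; lra.
    + destruct (NB_has_norm n A (V i) (C * a)) as [l [Hl Hle]]; eauto; try lra. exists l. split; auto. unfold M. nra.
  - apply (H_to_F n F Q Qi Hinv U V (fun k => evalf (2 * n) (F k) (pair_tuple n U V))).
    + exact HVfix.
    + intros k Hk w. apply (evalf_spec (2 * n) n (F k) _ A A L M); auto; try lra.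
      apply HTb. intros; eapply NB_weaken; [apply HVb; auto|unfold M; nra].
  - intros i Hi. apply eval_is_iff. apply HVconv; auto.
  - intros V' HV' HFV' i w Hi.
    assert (HV'M : forall j, (j < n)%nat -> NB n A (V' j) M).
    { intros j Hj. destruct (HV' j Hj) as [[Hs' _] [l [Hl Hlt]]]. eapply NB_weaken. apply has_norm_NB; eauto; lra.
      unfold M in *. lra. }
    apply (fix_unique n A A h a M H U HA0 HA0 ltac:(lra) HaM Hs HG HH0 HH1 HUa ltac:(lra) HLc V' V); auto.
    + intros j Hj. split; auto. eapply NB_weaken; [apply HVb; auto|unfold M; nra].
    + intros j Hj. apply (F_to_H n F Qi); auto.
Qed.
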